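(* Let $f$ be a real-analytic function on a neighborhood of $[-1,0]$ with $f(-1)=0$ and $f'(x)<0$ for $-1\le x\le 0$. Let $D_2$ be the open triangle bounded by the segment $\{(x,0):-1\le x\le 1\}$ and the lines $y=-x-1$ and $y=x-1$ (with vertices $(-1,0)$, $(1,0)$, $(0,-1)$), and let $AC=\{(x,-x-1):-1\le x\le 0\}$. Then there exists an open set $D_1$ in the upper half-plane $y>0$, adjacent to the whole interval $\{(x,0):-1<x<1\}$ (i.e. $D=D_1\cup\{(x,0):-1<x<1\}\cup D_2$ is a domain), and a function $U\in C^1(D)\cap C^2(D_1)\cap C^2(D_2)$ satisfying $$\frac{\partial^2 U}{\partial x^2}+\operatorname{sign}(U)\,\frac{\partial^2 U}{\partial y^2}=0$$ in $D_1\cup D_2$, with $U>0$ in $D_1$, $U<0$ in $D_2$, and $U(x,-x-1)=f(x)$ for $-1\le x\le 0$. Explicitly, $U(x,y)=f\!\left(\tfrac{x-y-1}{2}\right)-f\!\left(\tfrac{x+y-1}{2}\right)$ in $D_2$, and $U(x,y)=i\left(f\!\left(\tfrac{z-1}{2}\right)-f\!\left(\tfrac{\bar z-1}{2}\right)\right)$, $z=x+iy$, in $D_1$, where $f$ denotes its holomorphic extension.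
   Context: $\operatorname{sign}(U)$ equals $1$ if $U>0$, $-1$ if $U<0$, $0$ if $U=0$. Thus the equation is the Laplace equation where $U>0$ and the wave equation where $U<0$. The lines $y=-x-1$ and $y=x-1$ are characteristics of the wave equation. *)

(* Defs.v *)
From Stdlib Require Import Reals.
From Coquelicot Require Import Coquelicot.
Open Scope R_scope.

Definition sgn (u : R) : R := if Rlt_dec 0 u then 1 else if Rlt_dec u 0 then -1 else 0.

Definition analytic_at (f : R -> R) (x0 : R) : Prop :=
  exists (a : nat -> R) (r : R), 0 < r /\
    forall x, Rabs (x - x0) < r -> is_pseries a (x - x0) (f x).

Definition analytic_near_m10 (f : R -> R) : Prop :=
  exists eps, 0 < eps /\ forall x, -1 - eps < x < eps -> analytic_at f x.

Definition open2 (S : R -> R -> Prop) : Prop :=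
  forall x y, S x y -> exists e, 0 < e /\
    forall u v, (u - x)^2 + (v - y)^2 < e^2 -> S u v.

Definition connected2 (S : R -> R -> Prop) : Prop :=
  ~ exists A B : R -> R -> Prop,
      open2 A /\ open2 B /\
      (forall x y, S x y -> A x y \/ B x y) /\
      (forall x y, S x y -> A x y -> B x y -> False) /\
      (exists x y, S x y /\ A x y) /\ (exists x y, S x y /\ B x y).

Definition domain2 (S : R -> R -> Prop) : Prop :=
  (exists x y, S x y) /\ open2 S /\ connected2 S.

Definition cont2 (g : R -> R -> R) (x y : R) : Prop :=
  continuous (fun p : R * R => g (fst p) (snd p)) (x, y).

Definition dx (g : R -> R -> R) : R -> R -> R := fun x y => Derive (fun t => g t y) x.
Definition dy (g : R -> R -> R) : R -> R -> R := fun x y => Derive (fun t => g x t) y.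

Definition C1on (S : R -> R -> Prop) (g : R -> R -> R) : Prop :=
  forall x y, S x y ->
    ex_derive (fun t => g t y) x /\ ex_derive (fun t => g x t) y /\
    cont2 g x y /\ cont2 (dx g) x y /\ cont2 (dy g) x y.

Definition C2on (S : R -> R -> Prop) (g : R -> R -> R) : Prop :=
  C1on S g /\ C1on S (dx g) /\ C1on S (dy g).

Definition D2 (x y : R) : Prop := y < 0 /\ x - 1 < y /\ - x - 1 < y.

Definition Seg (x y : R) : Prop := y = 0 /\ -1 < x < 1.

Definition holo_at (g : C -> C) (w : C) : Prop :=
  exists l : C, @is_derive C_AbsRing C_NormedModule g w l.

(* Main.v *)
Require Import Defs.
From Stdlib Require Import Reals Lra Lia Psatz Arith Factorial List ClassicalEpsilon Classical.
From Coquelicot Require Import Coquelicot.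
Open Scope R_scope.

Fixpoint rsum (u : nat -> R) (N : nat) : R :=
  match N with O => 0 | S n => rsum u n + u n end.

Fixpoint csum (u : nat -> C) (N : nat) : C :=
  match N with O => RtoC 0 | S n => Cplus (csum u n) (u n) end.

Lemma sum_n_rsum (a : nat -> R) N : sum_n a N = rsum a (S N).
Proof.
  induction N.
  - rewrite sum_O. simpl. ring.
  - rewrite sum_Sn, IHN. simpl. unfold plus; simpl. ring.
Qed.

Lemma is_series_rsum (a : nat -> R) l :
  (forall eps : posreal, exists N0, forall N, (N0 <= N)%nat -> Rabs (rsum a N - l) < eps) ->
  is_series a l.
Proof.
  intros H.
  assert (is_lim_seq (sum_n a) l).
  { apply is_lim_seq_spec. intros eps. destruct (H eps) as [N0 HN].
    exists N0. intros n Hn. rewrite sum_n_rsum. apply HN. lia. }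
  exact H0.
Qed.

Lemma rsum_lim (a : nat -> R) : ex_series a ->
  forall eps : posreal, exists N0, forall N, (N0 <= N)%nat -> Rabs (rsum a N - Series a) < eps.
Proof.
  intros Ha eps.
  assert (H : is_lim_seq (sum_n a) (Series a)) by (apply Series_correct; auto).
  apply is_lim_seq_spec in H. destruct (H eps) as [N0 HN].
  exists (S N0). intros N HN'. destruct N. lia.
  rewrite <- sum_n_rsum. apply HN. lia.
Qed.

Lemma rsum_ext u v N : (forall k, (k < N)%nat -> u k = v k) -> rsum u N = rsum v N.
Proof. induction N; intros H; simpl; auto. rewrite IHN, H; auto. Qed.

Lemma rsum_le u v N : (forall k, (k < N)%nat -> u k <= v k) -> rsum u N <= rsum v N.
Proof. induction N; intros H; simpl. lra. assert (u N <= v N) by auto.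
  assert (rsum u N <= rsum v N) by (apply IHN; auto). lra. Qed.

Lemma rsum_nonneg u N : (forall k, 0 <= u k) -> 0 <= rsum u N.
Proof. intros H; induction N; simpl. lra. specialize (H N). lra. Qed.

Lemma rsum_plus u v N : rsum (fun k => u k + v k) N = rsum u N + rsum v N.
Proof. induction N; simpl. ring. rewrite IHN. ring. Qed.

Lemma rsum_scal c u N : rsum (fun k => c * u k) N = c * rsum u N.
Proof. induction N; simpl. ring. rewrite IHN. ring. Qed.

Lemma rsum_mono u N M : (forall k, 0 <= u k) -> (N <= M)%nat -> rsum u N <= rsum u M.
Proof. intros H HNM. induction HNM. lra. simpl. specialize (H m). lra. Qed.

Lemma rsum_abs u N : Rabs (rsum u N) <= rsum (fun k => Rabs (u k)) N.
Proof. induction N; simpl. rewrite Rabs_R0; lra.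
  eapply Rle_trans. apply Rabs_triang. lra. Qed.

Lemma rsum_le_Series u N : (forall k, 0 <= u k) -> ex_series u -> rsum u N <= Series u.
Proof.
  intros H Hu.
  destruct (Rle_lt_dec (rsum u N) (Series u)) as [h|h]; auto.
  exfalso. set (e := rsum u N - Series u).
  assert (He : 0 < e) by (unfold e; lra).
  destruct (rsum_lim u Hu (mkposreal e He)) as [N0 HN]. simpl in HN.
  specialize (HN (max N0 N) (Nat.le_max_l _ _)).
  assert (rsum u N <= rsum u (max N0 N)) by (apply rsum_mono; auto; lia).
  apply Rabs_def2 in HN. unfold e in HN. lra.
Qed.

Lemma ex_series_le_R (u b : nat -> R) : (forall k, Rabs (u k) <= b k) -> ex_series b -> ex_series u.
Proof.
  intros H Hb. apply (@ex_series_le R_AbsRing R_CompleteNormedModule u b); auto.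
Qed.

Lemma tail_bound (u b : nat -> R) N :
  (forall k, Rabs (u k) <= b k) -> ex_series b ->
  ex_series u /\ Rabs (Series u - rsum u N) <= Series b - rsum b N.
Proof.
  intros Hub Hb.
  assert (Hu : ex_series u) by (apply (ex_series_le_R u b); auto).
  split; auto.
  destruct (Rle_lt_dec (Rabs (Series u - rsum u N)) (Series b - rsum b N)) as [h|h]; auto.
  exfalso. set (e := (Rabs (Series u - rsum u N) - (Series b - rsum b N)) / 2).
  assert (He : 0 < e) by (unfold e; lra).
  destruct (rsum_lim u Hu (mkposreal e He)) as [N1 H1].
  destruct (rsum_lim b Hb (mkposreal e He)) as [N2 H2]. simpl in *.
  set (M := max N (max N1 N2)).
  specialize (H1 M ltac:(unfold M; lia)). specialize (H2 M ltac:(unfold M; lia)).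
  assert (HM : (N <= M)%nat) by (unfold M; lia).
  assert (HD : Rabs (rsum u M - rsum u N) <= rsum b M - rsum b N).
  { clear -HM Hub. induction HM. rewrite Rminus_eq_0, Rabs_R0. lra.
    simpl. replace (rsum u m + u m - rsum u N) with ((rsum u m - rsum u N) + u m) by ring.
    eapply Rle_trans. apply Rabs_triang. specialize (Hub m). lra. }
  apply Rabs_def2 in H2.
  assert (HT : Rabs (Series u - rsum u N) <= Rabs (Series u - rsum u M) + Rabs (rsum u M - rsum u N)).
  { replace (Series u - rsum u N) with ((Series u - rsum u M) + (rsum u M - rsum u N)) by ring.
    apply Rabs_triang. }
  rewrite (Rabs_minus_sym (rsum u M)) in H1.
  unfold e in *. clearbody M. lra.
Qed.

Lemma tail_lim (b : nat -> R) : ex_series b ->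
  forall eps : posreal, exists N0, forall N, (N0 <= N)%nat -> Series b - rsum b N < eps.
Proof.
  intros Hb eps. destruct (rsum_lim b Hb eps) as [N0 H]. exists N0. intros N HN.
  specialize (H N HN). apply Rabs_def2 in H. lra.
Qed.

Lemma le_lim x y (e : nat -> R) :
  (forall eps : posreal, exists N, e N < eps) ->
  (forall N, x <= y + e N) -> x <= y.
Proof.
  intros He H. destruct (Rle_lt_dec x y) as [h|h]; auto. exfalso.
  destruct (He (mkposreal (x - y) ltac:(lra))) as [N HN]. simpl in HN.
  specialize (H N). lra.
Qed.

Lemma Cmod_le_abs (z : C) : Cmod z <= Rabs (Re z) + Rabs (Im z).
Proof.
  destruct z as [x y]. unfold Cmod, Re, Im; cbn [fst snd].
  rewrite <- (sqrt_pow2 (Rabs x + Rabs y)) by (pose proof (Rabs_pos x); pose proof (Rabs_pos y); lra).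
  apply sqrt_le_1_alt.
  pose proof (Rabs_pos x); pose proof (Rabs_pos y).
  rewrite <- (pow2_abs x), <- (pow2_abs y). nra.
Qed.

Lemma Re_le_Cmod z : Rabs (Re z) <= Cmod z.
Proof. apply re_le_Cmod. Qed.
Lemma Im_le_Cmod z : Rabs (Im z) <= Cmod z.
Proof. destruct z as [x y]. unfold Cmod, Im; cbn [fst snd].
  rewrite <- sqrt_Rsqr_abs. apply sqrt_le_1_alt. unfold Rsqr. nra. Qed.

Lemma ReM (x y : C) : Re (x - y)%C = Re x - Re y.
Proof. destruct x, y; simpl; ring. Qed.
Lemma ImM (x y : C) : Im (x - y)%C = Im x - Im y.
Proof. destruct x, y; simpl; ring. Qed.
Lemma ReP (x y : C) : Re (x + y)%C = Re x + Re y.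
Proof. destruct x, y; simpl; ring. Qed.
Lemma ImP (x y : C) : Im (x + y)%C = Im x + Im y.
Proof. destruct x, y; simpl; ring. Qed.

Lemma Re_csum u N : Re (csum u N) = rsum (fun k => Re (u k)) N.
Proof. induction N; simpl. auto. rewrite <- IHN. reflexivity. Qed.
Lemma Im_csum u N : Im (csum u N) = rsum (fun k => Im (u k)) N.
Proof. induction N; simpl. auto. rewrite <- IHN. reflexivity. Qed.

Lemma Cmod_csum u N : Cmod (csum u N) <= rsum (fun k => Cmod (u k)) N.
Proof. induction N; simpl. rewrite Cmod_0; lra.
  eapply Rle_trans. apply Cmod_triangle. lra. Qed.

Lemma csum_ext u v N : (forall k, (k < N)%nat -> u k = v k) -> csum u N = csum v N.
Proof. induction N; intros H; simpl; auto. rewrite IHN, H; auto. Qed.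

Lemma csum_plus u v N : csum (fun k => (u k + v k)%C) N = (csum u N + csum v N)%C.
Proof. induction N; simpl. ring. rewrite IHN. ring. Qed.

Lemma csum_minus u v N : csum (fun k => (u k - v k)%C) N = (csum u N - csum v N)%C.
Proof. induction N; simpl. ring. rewrite IHN. ring. Qed.

Lemma csum_scal c u N : csum (fun k => (c * u k)%C) N = (c * csum u N)%C.
Proof. induction N; simpl. ring. rewrite IHN. ring. Qed.

Lemma csum_swap (u : nat -> nat -> C) N M :
  csum (fun n => csum (u n) M) N = csum (fun k => csum (fun n => u n k) N) M.
Proof.
  induction N; simpl.
  - induction M; simpl; auto. rewrite <- IHM. ring.
  - rewrite IHN. rewrite <- csum_plus. reflexivity.
Qed.

Lemma csum_shift u M : csum u (S M) = (u O + csum (fun k => u (S k)) M)%C.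
Proof. induction M. simpl. ring. simpl in *. rewrite IHM. ring. Qed.

Lemma csum_RtoC u N : csum (fun k => RtoC (u k)) N = RtoC (rsum u N).
Proof. induction N; simpl. auto. rewrite IHN. rewrite RtoC_plus. reflexivity. Qed.

Definition pt (a : nat -> R) (z : C) (k : nat) : C := (RtoC (a k) * z ^ k)%C.
Definition CS (a : nat -> R) (z : C) : C :=
  (Series (fun k => Re (pt a z k)), Series (fun k => Im (pt a z k))).

Lemma Cmod_pt a z k : Cmod (pt a z k) = Rabs (a k) * Cmod z ^ k.
Proof. unfold pt. rewrite Cmod_mult, Cmod_R, Cmod_pow. auto. Qed.

Lemma CS_ext a b z : (forall k, a k = b k) -> CS a z = CS b z.
Proof. intros H. unfold CS, pt. f_equal; apply Series_ext; intros k; rewrite H; auto. Qed.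

Definition absb (a : nat -> R) (R0 : R) (k : nat) : R := Rabs (a k) * R0 ^ k.

Lemma pt_bound a z R0 k : Cmod z <= R0 -> Cmod (pt a z k) <= absb a R0 k.
Proof. intros H. rewrite Cmod_pt. unfold absb. apply Rmult_le_compat_l. apply Rabs_pos.
  apply pow_incr. split; auto. apply Cmod_ge_0. Qed.

Lemma CS_partial a z R0 N :
  ex_series (absb a R0) -> Cmod z <= R0 ->
  Cmod (CS a z - csum (pt a z) N)%C <= 2 * (Series (absb a R0) - rsum (absb a R0) N).
Proof.
  intros Hb Hz.
  eapply Rle_trans. apply Cmod_le_abs.
  destruct (tail_bound (fun k => Re (pt a z k)) (absb a R0) N) as [_ H1]; auto.
  { intros k. eapply Rle_trans. apply Re_le_Cmod. apply pt_bound; auto. }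
  destruct (tail_bound (fun k => Im (pt a z k)) (absb a R0) N) as [_ H2]; auto.
  { intros k. eapply Rle_trans. apply Im_le_Cmod. apply pt_bound; auto. }
  replace (Re (CS a z - csum (pt a z) N)%C) with (Series (fun k => Re (pt a z k)) - rsum (fun k => Re (pt a z k)) N).
  replace (Im (CS a z - csum (pt a z) N)%C) with (Series (fun k => Im (pt a z k)) - rsum (fun k => Im (pt a z k)) N).
  lra.
  - rewrite ImM, <- Im_csum. reflexivity.
  - rewrite ReM, <- Re_csum. reflexivity.
Qed.

Lemma CS_bound a z R0 : ex_series (absb a R0) -> Cmod z <= R0 ->
  Cmod (CS a z) <= 2 * Series (absb a R0).
Proof.
  intros Hb Hz. pose proof (CS_partial a z R0 0 Hb Hz).
  replace (csum (pt a z) 0) with (RtoC 0) in H by reflexivity.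
  replace (CS a z - RtoC 0)%C with (CS a z) in H by ring. simpl rsum in H. lra.
Qed.

Lemma absb_ex a R0 : 0 <= R0 -> Rbar_lt R0 (CV_radius a) -> ex_series (absb a R0).
Proof.
  intros H0 H. assert (Rbar_lt (Rabs R0) (CV_radius a)) by (rewrite Rabs_pos_eq; auto).
  pose proof (CV_disk_inside a R0 H1).
  eapply ex_series_ext; [|exact H2]. intros n. simpl. unfold absb.
  rewrite Rabs_mult, <- RPow_abs, (Rabs_pos_eq R0); auto.
Qed.

Definition Ek (z h : C) (k : nat) : C :=
  ((z + h) ^ k - z ^ k - RtoC (INR k) * z ^ (pred k) * h)%C.

Lemma Ek_rec z h k :
  Ek z h (S (S k)) = ((z + h) * Ek z h (S k) + RtoC (INR (S k)) * z ^ k * (h * h))%C.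
Proof.
  unfold Ek. simpl pred. rewrite !S_INR, !RtoC_plus. simpl Cpow. ring.
Qed.

Lemma Ek_bound z h R0 : Cmod z <= R0 -> Cmod (z + h)%C <= R0 ->
  forall k, Cmod (Ek z h (S (S k))) <= (INR k + 2) ^ 2 * R0 ^ k * Cmod h ^ 2.
Proof.
  intros Hz Hzh. assert (HR : 0 <= R0) by (pose proof (Cmod_ge_0 z); lra).
  induction k.
  - unfold Ek. simpl. replace ((z + h) * ((z + h) * 1) - z * (z * 1) - RtoC (1 + 1) * (z * 1) * h)%C
      with (h * h)%C by (rewrite RtoC_plus; ring).
    rewrite Cmod_mult. simpl. pose proof (Cmod_ge_0 h). nra.
  - rewrite Ek_rec. eapply Rle_trans. apply Cmod_triangle.
    rewrite !Cmod_mult, Cmod_R, Cmod_pow. rewrite Rabs_pos_eq by (apply pos_INR).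
    pose proof (Cmod_ge_0 h). pose proof (Cmod_ge_0 (z+h)%C). pose proof (pos_INR k).
    pose proof (Cmod_ge_0 (Ek z h (S (S k)))). pose proof (Cmod_ge_0 z).
    assert (Hp : Cmod z ^ k <= R0 ^ k) by (apply pow_incr; split; auto).
    assert (Hp0 : 0 <= R0 ^ k) by (apply pow_le; auto).
    assert (Hp1 : 0 <= Cmod z ^ k) by (apply pow_le; auto).
    rewrite !S_INR.
    change (Cmod z ^ S k) with (Cmod z * Cmod z ^ k).
    change (R0 ^ S k) with (R0 * R0 ^ k).
    assert (HA : Cmod (z + h)%C * Cmod (Ek z h (S (S k))) <= R0 * ((INR k + 2) ^ 2 * R0 ^ k * Cmod h ^ 2)).
    { apply Rmult_le_compat; auto. }
    assert (HB : Cmod z * Cmod z ^ k <= R0 * R0 ^ k) by (apply Rmult_le_compat; auto).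
    assert (HC : (INR k + 1 + 1) * (Cmod z * Cmod z ^ k) * (Cmod h * Cmod h) <=
                 (INR k + 2) * (R0 * R0 ^ k) * (Cmod h ^ 2)).
    { replace (INR k + 1 + 1) with (INR k + 2) by ring. simpl pow. rewrite Rmult_1_r.
      apply Rmult_le_compat_r. nra. apply Rmult_le_compat_l; lra. }
    assert (HD : 0 <= R0 * R0 ^ k * Cmod h ^ 2) by (apply Rmult_le_pos; [nra| apply pow2_ge_0]).
    nra.
Qed.

Definition c2 (a : nat -> R) (R0 : R) (k : nat) : R :=
  match k with O => 0 | S O => 0 | S (S j) => Rabs (a k) * ((INR j + 2) ^ 2 * R0 ^ j) end.

Lemma fact_SS j : INR (fact (j + 2)) = (INR j + 2) * (INR j + 1) * INR (fact j).
Proof. replace (j + 2)%nat with (S (S j)) by lia.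
  rewrite !fact_simpl, !mult_INR, !S_INR. ring. Qed.

Lemma c2_ex a R0 : 0 <= R0 -> Rbar_lt R0 (CV_radius a) -> ex_series (c2 a R0).
Proof.
  intros H0 H. apply ex_series_incr_1, ex_series_incr_1.
  pose proof (absb_ex (PS_derive_n 2 a) R0 H0 ltac:(rewrite CV_radius_derive_n; auto)).
  apply (ex_series_le_R _ (fun n => 2 * absb (PS_derive_n 2 a) R0 n)).
  2: { eapply ex_series_ext; [| apply (@ex_series_scal_l R_AbsRing R_NormedModule 2 _ H1)].
        intros n; reflexivity. }
  intros n. simpl c2. unfold absb, PS_derive_n.
  rewrite fact_SS. pose proof (INR_fact_lt_0 n). pose proof (pos_INR n).
  replace ((INR n + 2) * (INR n + 1) * INR (fact n) / INR (fact n) * a (n + 2)%nat)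
    with ((INR n + 2) * (INR n + 1) * a (n+2)%nat) by (field; lra).
  replace (n + 2)%nat with (S (S n)) by lia.
  rewrite Rabs_pos_eq.
  2: { apply Rmult_le_pos. apply Rabs_pos. apply Rmult_le_pos. nra. apply pow_le; auto. }
  rewrite !Rabs_mult, (Rabs_pos_eq (INR n + 2)), (Rabs_pos_eq (INR n + 1)) by lra.
  pose proof (Rabs_pos (a (S (S n)))). pose proof (pow_le R0 n H0).
  assert (0 <= Rabs (a (S (S n))) * R0 ^ n) by nra.
  set (P := Rabs (a (S (S n))) * R0 ^ n) in *.
  assert (HQ : (INR n + 2) ^ 2 <= 2 * ((INR n + 2) * (INR n + 1))) by nra.
  assert (HQ2 : (INR n + 2) ^ 2 * P <= 2 * ((INR n + 2) * (INR n + 1)) * P) by (apply Rmult_le_compat_r; auto).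
  unfold P in *. nra.
Qed.

Lemma FI a z h N :
  (csum (pt a (z + h)) (S N) - csum (pt a z) (S N) - h * csum (pt (PS_derive a) z) N)%C
  = csum (fun k => RtoC (a k) * Ek z h k)%C (S N).
Proof.
  induction N.
  - unfold pt, Ek. simpl. ring.
  - change (csum (pt a (z + h)) (S (S N))) with (csum (pt a (z + h)) (S N) + pt a (z+h) (S N))%C.
    change (csum (pt a z) (S (S N))) with (csum (pt a z) (S N) + pt a z (S N))%C.
    change (csum (pt (PS_derive a) z) (S N)) with (csum (pt (PS_derive a) z) N + pt (PS_derive a) z N)%C.
    change (csum (fun k => RtoC (a k) * Ek z h k)%C (S (S N))) with
      (csum (fun k => RtoC (a k) * Ek z h k)%C (S N) + RtoC (a (S N)) * Ek z h (S N))%C.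
    rewrite <- IHN. unfold pt, Ek, PS_derive. simpl pred. rewrite RtoC_mult. ring.
Qed.

Definition Kd a R0 := Series (c2 a R0).

Lemma c2_nonneg a R0 k : 0 <= R0 -> 0 <= c2 a R0 k.
Proof. intros H. destruct k as [|[|j]]; simpl; try lra.
  apply Rmult_le_pos. apply Rabs_pos. apply Rmult_le_pos. apply pow2_ge_0. apply pow_le; auto. Qed.

Lemma Ek_bound_all a z h R0 k : Cmod z <= R0 -> Cmod (z + h)%C <= R0 ->
  Cmod (RtoC (a k) * Ek z h k)%C <= c2 a R0 k * Cmod h ^ 2.
Proof.
  intros Hz Hzh. assert (HR : 0 <= R0) by (pose proof (Cmod_ge_0 z); lra).
  destruct k as [|[|j]].
  - unfold Ek. simpl. replace (1 - 1 - RtoC 0 * 1 * h)%C with (RtoC 0) by ring.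
    rewrite Cmult_0_r, Cmod_0. lra.
  - unfold Ek. simpl. replace ((z + h) * 1 - z * 1 - RtoC 1 * 1 * h)%C with (RtoC 0) by ring.
    rewrite Cmult_0_r, Cmod_0. lra.
  - rewrite Cmod_mult, Cmod_R. change (c2 a R0 (S (S j))) with (Rabs (a (S (S j))) * ((INR j + 2) ^ 2 * R0 ^ j)). pose proof (Ek_bound z h R0 Hz Hzh j).
    pose proof (Rabs_pos (a (S (S j)))).
    replace (Rabs (a (S (S j))) * ((INR j + 2) ^ 2 * R0 ^ j) * Cmod h ^ 2) with
      (Rabs (a (S (S j))) * ((INR j + 2) ^ 2 * R0 ^ j * Cmod h ^ 2)) by ring.
    apply Rmult_le_compat_l; auto.
Qed.

Lemma tails_small (b1 b2 : nat -> R) (c : R) : ex_series b1 -> ex_series b2 -> 0 <= c ->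
  forall eps : posreal, exists N,
    4 * (Series b1 - rsum b1 (S N)) + 2 * c * (Series b2 - rsum b2 N) < eps.
Proof.
  intros H1 H2 Hc eps.
  destruct (tail_lim b1 H1 (mkposreal (eps / 8) ltac:(pose proof (cond_pos eps); lra))) as [N1 HN1].
  destruct (tail_lim b2 H2 (mkposreal (eps / (4 * (c + 1))) ltac:(pose proof (cond_pos eps); apply Rdiv_lt_0_compat; lra))) as [N2 HN2].
  simpl in *. exists (max N1 N2).
  specialize (HN1 (S (max N1 N2)) ltac:(lia)). specialize (HN2 (max N1 N2) ltac:(lia)).
  simpl rsum in HN1 |- *.
  assert (HT2 : 0 <= Series b2 - rsum b2 (max N1 N2) \/ Series b2 - rsum b2 (max N1 N2) < 0) by lra.
  destruct HT2 as [HT2|HT2].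
  - assert (c * (Series b2 - rsum b2 (max N1 N2)) <= (c + 1) * (eps / (4 * (c + 1)))).
    { apply Rmult_le_compat; lra. }
    replace ((c + 1) * (eps / (4 * (c + 1)))) with (eps / 4) in H by (field; lra). lra.
  - assert (c * (Series b2 - rsum b2 (max N1 N2)) <= 0) by nra. pose proof (cond_pos eps). lra.
Qed.

Lemma CS_deriv a z h R0 : 0 <= R0 -> Rbar_lt R0 (CV_radius a) -> Cmod z + Cmod h <= R0 ->
  Cmod (CS a (z + h) - CS a z - h * CS (PS_derive a) z)%C <= Kd a R0 * Cmod h ^ 2.
Proof.
  intros H0 Hr Hzh.
  assert (Hz : Cmod z <= R0) by (pose proof (Cmod_ge_0 h); lra).
  assert (Hz2 : Cmod (z + h)%C <= R0) by (pose proof (Cmod_triangle z h); lra).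
  pose proof (absb_ex a R0 H0 Hr) as Ha.
  pose proof (absb_ex (PS_derive a) R0 H0 ltac:(rewrite CV_radius_derive; auto)) as Ha'.
  pose proof (c2_ex a R0 H0 Hr) as Hc2.
  apply (le_lim _ _ (fun N => 4 * (Series (absb a R0) - rsum (absb a R0) (S N)) +
            2 * Cmod h * (Series (absb (PS_derive a) R0) - rsum (absb (PS_derive a) R0) N))).
  { apply tails_small; auto. apply Cmod_ge_0. }
  intros N.
  pose proof (FI a z h N) as HF.
  set (Y := csum (fun k => RtoC (a k) * Ek z h k)%C (S N)) in *.
  assert (HY : Cmod Y <= Kd a R0 * Cmod h ^ 2).
  { unfold Y. eapply Rle_trans. apply Cmod_csum.
    eapply Rle_trans. apply rsum_le. intros k _. apply (Ek_bound_all a z h R0 k Hz Hz2).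
    rewrite (Rmult_comm (Kd a R0)).
    replace (rsum (fun k => c2 a R0 k * Cmod h ^ 2) (S N)) with
      (Cmod h ^ 2 * rsum (c2 a R0) (S N)) by (rewrite <- rsum_scal; apply rsum_ext; intros; ring).
    apply Rmult_le_compat_l. apply pow2_ge_0. apply rsum_le_Series; auto.
    intros; apply c2_nonneg; auto. }
  pose proof (CS_partial a (z + h)%C R0 (S N) Ha Hz2) as P1.
  pose proof (CS_partial a z R0 (S N) Ha Hz) as P2.
  pose proof (CS_partial (PS_derive a) z R0 N Ha' Hz) as P3.
  replace (CS a (z + h) - CS a z - h * CS (PS_derive a) z)%C with
    ((CS a (z + h) - csum (pt a (z + h)) (S N)) - (CS a z - csum (pt a z) (S N))
     - h * (CS (PS_derive a) z - csum (pt (PS_derive a) z) N) + Y)%C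
    by (rewrite <- HF; ring).
  eapply Rle_trans. apply Cmod_triangle.
  eapply Rle_trans. apply Rplus_le_compat_r. apply Cmod_triangle.
  eapply Rle_trans. apply Rplus_le_compat_r. apply Rplus_le_compat_r. apply Cmod_triangle.
  rewrite Cmod_opp, Cmod_opp, Cmod_mult.
  pose proof (Cmod_ge_0 h).
  assert (Cmod h * Cmod (CS (PS_derive a) z - csum (pt (PS_derive a) z) N)%C <=
          Cmod h * (2 * (Series (absb (PS_derive a) R0) - rsum (absb (PS_derive a) R0) N))).
  { apply Rmult_le_compat_l; auto. }
  lra.
Qed.

Definition cb (k n : nat) : R := if (n <=? k)%nat then Binomial.C k n else 0.

Lemma C_n0 n : Binomial.C n 0 = 1.
Proof. unfold Binomial.C. rewrite Nat.sub_0_r. simpl. field. apply INR_fact_neq_0. Qed.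
Lemma C_nn n : Binomial.C n n = 1.
Proof. unfold Binomial.C. rewrite Nat.sub_diag. simpl. field. apply INR_fact_neq_0. Qed.

Lemma cb_0 k : cb k 0 = 1.
Proof. unfold cb. simpl. apply C_n0. Qed.

Lemma cb_gt k n : (k < n)%nat -> cb k n = 0.
Proof. intros H. unfold cb. destruct (Nat.leb_spec n k); auto. lia. Qed.

Lemma cb_pascal k n : cb (S k) (S n) = cb k n + cb k (S n).
Proof.
  unfold cb. destruct (Nat.leb_spec (S n) (S k)); destruct (Nat.leb_spec n k);
    destruct (Nat.leb_spec (S n) k); try lia.
  - rewrite pascal by lia. reflexivity.
  - assert (n = k) by lia. subst. rewrite !C_nn. ring.
  - ring.
Qed.

Lemma cb_nonneg k n : 0 <= cb k n.
Proof. unfold cb. destruct (n <=? k)%nat; try lra. unfold Binomial.C.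
  apply Rmult_le_pos. apply pos_INR. left. apply Rinv_0_lt_compat.
  apply Rmult_lt_0_compat; apply INR_fact_lt_0. Qed.

Lemma csum_zero_after u M : (1 <= M)%nat -> (forall n, (0 < n)%nat -> u n = RtoC 0) -> csum u M = u O.
Proof.
  intros HM Hu. destruct M. lia. rewrite csum_shift.
  rewrite (csum_ext _ (fun _ => RtoC 0)). 2: { intros; apply Hu; lia. }
  assert (forall N, csum (fun _ => RtoC 0) N = RtoC 0). { induction N; simpl; auto. rewrite IHN. ring. }
  rewrite H. ring.
Qed.

Lemma binomC (d h : C) k M : (k < M)%nat ->
  ((d + h) ^ k)%C = csum (fun n => RtoC (cb k n) * d ^ (k - n) * h ^ n)%C M.
Proof.
  revert M. induction k; intros M HM.
  - rewrite csum_zero_after; auto. simpl. rewrite cb_0. ring.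
    intros n Hn. rewrite cb_gt by lia. ring.
  - destruct M as [|M']. lia.
    rewrite csum_shift. rewrite cb_0. rewrite Nat.sub_0_r.
    rewrite (csum_ext _ (fun m => (RtoC (cb k m) * d ^ (k - m) * h ^ m * h +
                                   RtoC (cb k (S m)) * d ^ (k - m) * h ^ (S m)))%C).
    2: { intros m _. rewrite cb_pascal. simpl Nat.sub. rewrite RtoC_plus. simpl Cpow. ring. }
    rewrite csum_plus.
    assert (E1 : csum (fun m => (RtoC (cb k m) * d ^ (k - m) * h ^ m) * h)%C M' = (h * (d + h) ^ k)%C).
    { rewrite (IHk M') by lia. rewrite <- csum_scal. apply csum_ext. intros; ring. }
    rewrite E1.
    assert (E2 : (d * (d + h) ^ k)%C = (d ^ S k + csum (fun m => RtoC (cb k (S m)) * d ^ (k - m) * h ^ S m)%C M')%C).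
    { rewrite (IHk (S M')) by lia. rewrite <- csum_scal. rewrite csum_shift.
      rewrite cb_0, Nat.sub_0_r. f_equal. change (d ^ S k)%C with (d * d ^ k)%C. ring.
      apply csum_ext. intros m _.
      destruct (Nat.le_gt_cases (S m) k).
      + replace (k - m)%nat with (S (k - S m)) by lia. simpl Cpow. ring.
      + rewrite cb_gt by lia. ring. }
    simpl Cpow at 1. rewrite Cmult_plus_distr_r, E2. ring.
Qed.

Lemma binomR (x y : R) k M : (k < M)%nat ->
  (x + y) ^ k = rsum (fun n => cb k n * x ^ (k - n) * y ^ n) M.
Proof.
  intros H. apply RtoC_inj. rewrite <- csum_RtoC, RtoC_pow, RtoC_plus.
  rewrite (binomC (RtoC x) (RtoC y) k M H). apply csum_ext. intros.
  rewrite !RtoC_mult, !RtoC_pow. reflexivity.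
Qed.

Lemma CV_radius_abs a : CV_radius (fun k => Rabs (a k)) = CV_radius a.
Proof.
  pose proof (CV_radius_bounded (fun k => Rabs (a k))) as H1.
  pose proof (CV_radius_bounded a) as H2.
  apply (is_lub_Rbar_eqset _ (fun r : R => exists M : R, forall n : nat, Rabs (Rabs (a n) * r ^ n) <= M)) in H2.
  2: { intros x. split; intros [M HM]; exists M; intros n; specialize (HM n);
       rewrite Rabs_mult, Rabs_Rabsolu, <- Rabs_mult in *; auto. }
  apply is_lub_Rbar_unique in H1. apply is_lub_Rbar_unique in H2. congruence.
Qed.

Lemma is_series_ind (u : nat -> R) (N : nat) : ex_series u ->
  is_series (fun k => if (N <=? k)%nat then u k else 0) (Series u - rsum u N).
Proof.
  intros Hu. apply (is_series_rsum (fun k => if (N <=? k)%nat then u k else 0)). intros eps.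
  destruct (rsum_lim u Hu eps) as [N0 HN0]. exists (max N N0). intros M HM.
  assert (E : rsum (fun k => if (N <=? k)%nat then u k else 0) M = rsum u M - rsum u N).
  { assert (HNM : (N <= M)%nat) by lia. clear -HNM. induction HNM.
    - rewrite (rsum_ext _ (fun _ => 0)). 2: { intros k Hk. destruct (Nat.leb_spec N k); [lia | reflexivity]. }
      assert (forall n, rsum (fun _ => 0) n = 0) by (induction n; simpl; lra). rewrite H. ring.
    - simpl. rewrite IHHNM. destruct (Nat.leb_spec N m); try lia. ring. }
  rewrite E. specialize (HN0 M ltac:(lia)).
  replace (rsum u M - rsum u N - (Series u - rsum u N)) with (rsum u M - Series u) by ring. auto.
Qed.

Lemma Series_ind (u : nat -> R) (N : nat) : ex_series u ->
  ex_series (fun k => if (N <=? k)%nat then u k else 0) /\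
  Series (fun k => if (N <=? k)%nat then u k else 0) = Series u - rsum u N.
Proof. intros H. pose proof (is_series_ind u N H). split. eexists; eauto.
  apply is_series_unique; auto. Qed.

Lemma rsum_Series (w : nat -> nat -> R) N : (forall n, ex_series (w n)) ->
  ex_series (fun k => rsum (fun n => w n k) N) /\
  rsum (fun n => Series (w n)) N = Series (fun k => rsum (fun n => w n k) N).
Proof.
  intros Hw. induction N.
  - simpl. split. exists 0. apply is_series_rsum. intros eps. exists O. intros.
    assert (forall n, rsum (fun _ => 0) n = 0) by (induction n; simpl; lra).
    rewrite H0. rewrite Rminus_0_r, Rabs_R0. apply cond_pos.
    symmetry. rewrite (Series_ext _ (fun _ => 0 * 0)) by (intros; ring).
    rewrite Series_scal_l. ring.
  - destruct IHN as [IH1 IH2]. simpl. split.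
    + destruct IH1 as [l1 Hl1]. destruct (Hw N) as [l2 Hl2].
      exists (l1 + l2). apply (is_series_plus _ _ _ _ Hl1 Hl2).
    + rewrite IH2. rewrite Series_plus; auto.
Qed.

Definition Bco (a : nat -> R) (d : R) (n : nat) : R :=
  PSeries (PS_derive_n n a) d / INR (fact n).

Definition vco (a : nat -> R) (d : R) (n k : nat) : R := cb k n * a k * d ^ (k - n).

Lemma vco_shift a d n j : vco a d n (n + j) = PS_derive_n n a j * d ^ j / INR (fact n).
Proof.
  unfold vco, PS_derive_n, cb. destruct (Nat.leb_spec n (n + j)); try lia.
  replace (n + j - n)%nat with j by lia. replace (j + n)%nat with (n + j)%nat by lia.
  unfold Binomial.C. replace (n + j - n)%nat with j by lia.
  field. split; apply INR_fact_neq_0.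
Qed.

Lemma is_series_vco a d n : Rbar_lt (Rabs d) (CV_radius a) -> is_series (vco a d n) (Bco a d n).
Proof.
  intros Hd.
  assert (Hex : ex_pseries (PS_derive_n n a) d) by (apply CV_radius_inside; rewrite CV_radius_derive_n; auto).
  assert (H1 : is_series (fun j => PS_derive_n n a j * d ^ j / INR (fact n)) (Bco a d n)).
  { unfold Bco. apply is_series_scal_r. apply is_pseries_R. apply PSeries_correct. auto. }
  destruct n as [|n].
  - eapply is_series_ext; [|exact H1]. intros j. change (vco a d 0 j) with (vco a d 0 (0 + j)).
    rewrite vco_shift. reflexivity.
  - apply (is_series_decr_n _ (S n)). lia.
    assert (E : sum_n (vco a d (S n)) (Init.Nat.pred (S n)) = 0).
    { rewrite sum_n_rsum. simpl Init.Nat.pred. rewrite (rsum_ext _ (fun _ => 0)).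
      assert (forall m, rsum (fun _ => 0) m = 0) by (induction m; simpl; lra). auto.
      intros k Hk. unfold vco. rewrite cb_gt by lia. ring. }
    match goal with |- is_series _ (plus _ (opp ?s)) => assert (E2 : s = 0) by exact E end.
    rewrite E2. match goal with |- is_series _ ?l => replace l with (Bco a d (S n)) end.
    2: { change (Bco a d (S n) = Bco a d (S n) + - 0). ring. }
    eapply is_series_ext; [|exact H1]. intros j. rewrite vco_shift. reflexivity.
Qed.

Lemma Series_vco a d n : Rbar_lt (Rabs d) (CV_radius a) -> ex_series (vco a d n) /\ Series (vco a d n) = Bco a d n.
Proof. intros H. pose proof (is_series_vco a d n H). split. eexists; eauto. apply is_series_unique; auto. Qed.

Lemma abs_vco a d n k : Rabs (vco a d n k) = vco (fun k => Rabs (a k)) (Rabs d) n k.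
Proof. unfold vco. rewrite !Rabs_mult, RPow_abs, (Rabs_pos_eq (cb k n)) by apply cb_nonneg. auto. Qed.

Lemma reexp_partial a d h N : Rbar_lt (Rabs d + Cmod h) (CV_radius a) ->
  Cmod (csum (pt (Bco a d) h) N - csum (pt a (RtoC d + h)) N)%C
  <= Series (absb a (Rabs d + Cmod h)) - rsum (absb a (Rabs d + Cmod h)) N.
Proof.
  intros Hr. set (rho := Rabs d + Cmod h).
  assert (Hrho : 0 <= rho) by (unfold rho; pose proof (Rabs_pos d); pose proof (Cmod_ge_0 h); lra).
  assert (Hd : Rbar_lt (Rabs d) (CV_radius a)).
  { eapply Rbar_le_lt_trans; [|exact Hr]. simpl. pose proof (Cmod_ge_0 h); lra. }
  assert (Hv : forall n, ex_series (vco a d n) /\ Series (vco a d n) = Bco a d n)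
    by (intros; apply Series_vco; auto).
  assert (Hav : forall n, ex_series (fun k => Rabs (vco a d n k))).
  { intros n. eapply ex_series_ext. intros k; symmetry; apply abs_vco.
    apply (Series_vco (fun k => Rabs (a k)) (Rabs d) n). rewrite Rabs_Rabsolu, CV_radius_abs. auto. }
  set (T := fun n => Bco a d n - rsum (vco a d n) N).
  assert (EA : csum (pt (Bco a d) h) N =
     (csum (pt a (RtoC d + h)) N + csum (fun n => RtoC (T n) * h ^ n) N)%C).
  { rewrite (csum_ext (pt (Bco a d) h) (fun n => (RtoC (rsum (vco a d n) N) * h ^ n + RtoC (T n) * h ^ n)%C)).
    2: { intros n _. unfold pt, T. rewrite <- Cmult_plus_distr_r, <- RtoC_plus. f_equal. f_equal. ring. }
    rewrite csum_plus. f_equal.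
    rewrite (csum_ext _ (fun n => csum (fun k => RtoC (vco a d n k) * h ^ n) N)%C).
    2: { intros n _. rewrite <- csum_RtoC. rewrite Cmult_comm, <- csum_scal. apply csum_ext. intros; ring. }
    rewrite csum_swap. apply csum_ext. intros k Hk.
    unfold pt. rewrite (binomC (RtoC d) h k N Hk). rewrite <- csum_scal. apply csum_ext. intros n _.
    unfold vco. rewrite !RtoC_mult, RtoC_pow. ring. }
  rewrite EA. replace (csum (pt a (RtoC d + h)) N + csum (fun n => RtoC (T n) * h ^ n) N - csum (pt a (RtoC d + h)) N)%C
    with (csum (fun n => RtoC (T n) * h ^ n) N)%C by ring.
  eapply Rle_trans. apply Cmod_csum.
  set (w := fun n k => if (N <=? k)%nat then Rabs (vco a d n k) * Cmod h ^ n else 0).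
  assert (Hw : forall n, ex_series (w n) /\ Series (w n) = (Series (fun k => Rabs (vco a d n k)) - rsum (fun k => Rabs (vco a d n k)) N) * Cmod h ^ n).
  { intros n. destruct (Series_ind (fun k => Rabs (vco a d n k) * Cmod h ^ n) N) as [W1 W2].
    { eapply ex_series_ext. intros k. rewrite Rmult_comm. reflexivity.
      eapply ex_series_ext; [|apply (@ex_series_scal_l R_AbsRing R_NormedModule (Cmod h ^ n) _ (Hav n))].
      intros; reflexivity. }
    split. exact W1. unfold w. rewrite W2.
    rewrite (Series_ext _ (fun k => Cmod h ^ n * Rabs (vco a d n k))) by (intros; ring).
    rewrite Series_scal_l. rewrite (rsum_ext _ (fun k => Cmod h ^ n * Rabs (vco a d n k))) by (intros; ring).
    rewrite rsum_scal. ring. }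
  apply Rle_trans with (rsum (fun n => Series (w n)) N).
  { apply rsum_le. intros n _. rewrite Cmod_mult, Cmod_R, Cmod_pow.
    destruct (tail_bound (vco a d n) (fun k => Rabs (vco a d n k)) N) as [_ TB]; [intros; lra | apply Hav |].
    destruct (Hv n) as [_ Hv2]. rewrite Hv2 in TB.
    rewrite (proj2 (Hw n)). apply Rmult_le_compat_r. apply pow_le, Cmod_ge_0. unfold T. exact TB. }
  destruct (rsum_Series w N (fun n => proj1 (Hw n))) as [HS1 HS2]. rewrite HS2.
  destruct (Series_ind (absb a rho) N (absb_ex a rho Hrho Hr)) as [HI1 HI2].
  rewrite <- HI2. apply Series_le; auto.
  intros k. split.
  { apply rsum_nonneg. intros n; unfold w; destruct (N <=? k)%nat;
    [apply Rmult_le_pos; [apply Rabs_pos| apply pow_le, Cmod_ge_0] | lra]. }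
  destruct (Nat.leb_spec N k).
  - unfold w. rewrite (rsum_ext _ (fun n => Rabs (vco a d n k) * Cmod h ^ n)).
    2: { intros n _. destruct (Nat.leb_spec N k); [reflexivity| lia]. }
    apply Rle_trans with (rsum (fun n => Rabs (vco a d n k) * Cmod h ^ n) (S k)).
    { apply rsum_mono. intros; apply Rmult_le_pos; [apply Rabs_pos| apply pow_le, Cmod_ge_0]. lia. }
    unfold absb, rho. rewrite (binomR (Rabs d) (Cmod h) k (S k)) by lia.
    rewrite <- rsum_scal. apply Req_le. apply rsum_ext. intros n _. rewrite abs_vco. unfold vco. ring.
  - unfold w. rewrite (rsum_ext _ (fun _ => 0)). 2: { intros n _. destruct (Nat.leb_spec N k); [lia | reflexivity]. }
    assert (Z : forall m, rsum (fun _ => 0) m = 0) by (induction m; simpl; lra). rewrite Z. lra.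
Qed.


Lemma CS_reexp a d h : Rbar_lt (Rabs d + Cmod h) (CV_radius a) ->
  CS (Bco a d) h = CS a (RtoC d + h)%C.
Proof.
  intros Hr. set (rho := Rabs d + Cmod h).
  assert (Hrho : 0 <= rho) by (unfold rho; pose proof (Rabs_pos d); pose proof (Cmod_ge_0 h); lra).
  pose proof (absb_ex a rho Hrho Hr) as Ha.
  assert (Hz : Cmod (RtoC d + h)%C <= rho).
  { unfold rho. eapply Rle_trans. apply Cmod_triangle. rewrite Cmod_R. lra. }
  assert (Key : forall N, Cmod (csum (pt (Bco a d) h) N - CS a (RtoC d + h))%C <=
                  3 * (Series (absb a rho) - rsum (absb a rho) N)).
  { intros N. pose proof (reexp_partial a d h N Hr) as P1. fold rho in P1.
    pose proof (CS_partial a (RtoC d + h)%C rho N Ha Hz) as P2.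
    replace (csum (pt (Bco a d) h) N - CS a (RtoC d + h))%C with
      ((csum (pt (Bco a d) h) N - csum (pt a (RtoC d + h)) N) - (CS a (RtoC d + h) - csum (pt a (RtoC d + h)) N))%C by ring.
    eapply Rle_trans. apply Cmod_triangle. rewrite Cmod_opp. lra. }
  assert (Lim : forall eps : posreal, exists N0, forall N, (N0 <= N)%nat ->
            Cmod (csum (pt (Bco a d) h) N - CS a (RtoC d + h))%C < eps).
  { intros eps. destruct (tail_lim _ Ha (mkposreal (eps / 3) ltac:(pose proof (cond_pos eps); lra))) as [N0 HN0].
    exists N0. intros N HN. specialize (HN0 N HN). simpl in HN0. specialize (Key N). lra. }
  assert (HRe : is_series (fun k => Re (pt (Bco a d) h k)) (Re (CS a (RtoC d + h)%C))).
  { apply (is_series_rsum (fun k => Re (pt (Bco a d) h k))). intros eps.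
    destruct (Lim eps) as [N0 HN0]. exists N0. intros N HN.
    rewrite <- Re_csum, <- ReM. eapply Rle_lt_trans. apply Re_le_Cmod. auto. }
  assert (HIm : is_series (fun k => Im (pt (Bco a d) h k)) (Im (CS a (RtoC d + h)%C))).
  { apply (is_series_rsum (fun k => Im (pt (Bco a d) h k))). intros eps.
    destruct (Lim eps) as [N0 HN0]. exists N0. intros N HN.
    rewrite <- Im_csum, <- ImM. eapply Rle_lt_trans. apply Im_le_Cmod. auto. }
  unfold CS at 1. rewrite (is_series_unique _ _ HRe), (is_series_unique _ _ HIm).
  destruct (CS a (RtoC d + h)%C); reflexivity.
Qed.

Lemma Series_zero : Series (fun _ => 0) = 0.
Proof. rewrite (Series_ext _ (fun _ => 0 * 0)) by (intros; ring). rewrite Series_scal_l. ring. Qed.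

Lemma C_eq (z w : C) : Re z = Re w -> Im z = Im w -> z = w.
Proof. destruct z, w; simpl; intros; subst; auto. Qed.

Lemma Re_CS a z : Re (CS a z) = Series (fun k => Re (pt a z k)).
Proof. reflexivity. Qed.
Lemma Im_CS a z : Im (CS a z) = Series (fun k => Im (pt a z k)).
Proof. reflexivity. Qed.

Lemma CS_real a x : CS a (RtoC x) = RtoC (PSeries a x).
Proof.
  apply C_eq; rewrite ?Re_CS, ?Im_CS, ?re_RtoC, ?im_RtoC.
  - unfold PSeries. apply Series_ext. intros k. unfold pt. rewrite <- RtoC_pow, <- RtoC_mult. apply re_RtoC.
  - rewrite <- Series_zero. apply Series_ext. intros k. unfold pt. rewrite <- RtoC_pow, <- RtoC_mult. apply im_RtoC.
Qed.

Lemma Im_CS_real a x : Im (CS a (RtoC x)) = 0.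
Proof. rewrite CS_real. reflexivity. Qed.
Lemma Re_CS_real a x : Re (CS a (RtoC x)) = PSeries a x.
Proof. rewrite CS_real. reflexivity. Qed.

Lemma pt_conj a z k : pt a (Cconj z) k = Cconj (pt a z k).
Proof. unfold pt. rewrite Cmult_conj, Cpow_conj. f_equal.
  unfold Cconj, RtoC; simpl. f_equal; ring. Qed.

Lemma CS_conj a z : CS a (Cconj z) = Cconj (CS a z).
Proof.
  apply C_eq.
  - rewrite (re_conj (CS a z)), (Re_CS a (Cconj z)), (Re_CS a z).
    apply Series_ext. intros k. rewrite pt_conj. apply re_conj.
  - rewrite (im_conj (CS a z)), (Im_CS a (Cconj z)), (Im_CS a z).
    rewrite <- Series_opp. apply Series_ext. intros k. rewrite pt_conj. apply im_conj.
Qed.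

Lemma CS_zero a : CS a (RtoC 0) = RtoC (a O).
Proof. rewrite CS_real, PSeries_0. reflexivity. Qed.

Lemma holo_from_bound (G : C -> C) (w0 l : C) (r K : R) :
  0 < r -> 0 <= K ->
  (forall w, Cmod (w - w0)%C < r -> Cmod (G w - G w0 - (w - w0) * l)%C <= K * Cmod (w - w0)%C ^ 2) ->
  @is_derive C_AbsRing C_NormedModule G w0 l.
Proof.
  intros Hr HK H. split.
  - apply is_linear_scal_l.
  - intros x Hx. apply (@is_filter_lim_locally_unique C_AbsRing (AbsRing_NormedModule C_AbsRing)) in Hx. subst x.
    intros eps.
    assert (He : 0 < Rmin r (eps / (K + 1))).
    { apply Rmin_pos; auto. apply Rdiv_lt_0_compat. apply cond_pos. lra. }
    exists (mkposreal _ He). intros y Hy.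
    change (Cmod (y - w0)%C < Rmin r (eps / (K + 1))) in Hy.
    assert (Hm1 : Cmod (y - w0)%C < r) by (eapply Rlt_le_trans; [exact Hy| apply Rmin_l]).
    assert (Hm2 : Cmod (y - w0)%C <= eps / (K + 1)) by (left; eapply Rlt_le_trans; [exact Hy| apply Rmin_r]).
    specialize (H y Hm1).
    change (Cmod (G y - G w0 - (y - w0) * l)%C <= eps * Cmod (y - w0)%C).
    eapply Rle_trans. exact H.
    pose proof (Cmod_ge_0 (y - w0)%C) as H0. pose proof (cond_pos eps).
    assert (K * Cmod (y - w0)%C <= eps).
    { apply Rle_trans with ((K + 1) * (eps / (K + 1))).
      apply Rmult_le_compat; lra. right. field. lra. }
    simpl pow. nra.
Qed.

Definition ext (F : R -> R) (w : C) : C :=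
  CS (fun n => Derive_n F n (Re w) / INR (fact n)) (0, Im w).

Lemma Cmod_im (y : R) : Cmod (0, y) = Rabs y.
Proof. unfold Cmod; simpl. rewrite <- sqrt_Rsqr_abs. f_equal. unfold Rsqr. ring. Qed.

Lemma locally_R (p eps : R) (P : R -> Prop) : 0 < eps -> (forall y, Rabs (y - p) < eps -> P y) -> locally p P.
Proof. intros He H. exists (mkposreal eps He). intros y Hy. apply H. exact Hy. Qed.

Lemma ext_local F c a r : 0 < r -> Rbar_lt r (CV_radius a) ->
  (forall x, Rabs (x - c) < r -> F x = PSeries a (x - c)) ->
  forall w, Rabs (Re w - c) + Rabs (Im w) < r -> ext F w = CS a (w - RtoC c)%C.
Proof.
  intros Hr Hrad HF w Hw.
  assert (Hd : Rabs (Re w - c) < r) by (pose proof (Rabs_pos (Im w)); lra).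
  assert (Hdr : Rbar_lt (Rabs (Re w - c)) (CV_radius a)) by (eapply Rbar_lt_trans; [|exact Hrad]; simpl; lra).
  unfold ext. rewrite (CS_ext _ (Bco a (Re w - c))).
  2: { intros n. unfold Bco. f_equal.
       rewrite (Derive_n_ext_loc F (fun x => PSeries a (x + - c))).
       - rewrite Derive_n_comp_trans. apply Derive_n_PSeries. auto.
       - apply (locally_R _ (r - Rabs (Re w - c))). lra. intros y Hy. apply HF.
         replace (y - c) with ((y - Re w) + (Re w - c)) by ring.
         eapply Rle_lt_trans. apply Rabs_triang. lra. }
  rewrite CS_reexp.
  - f_equal. destruct w as [x y]. apply C_eq; simpl; ring.
  - rewrite Cmod_im. eapply Rbar_le_lt_trans; [|exact Hrad]. simpl. lra.
Qed.

Lemma ext_conj F w : ext F (Cconj w) = Cconj (ext F w).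
Proof.
  unfold ext. rewrite re_conj, im_conj.
  replace (0, - Im w) with (Cconj (0, Im w)) by (unfold Cconj; simpl; f_equal).
  apply CS_conj.
Qed.

Lemma ext_real F t : ext F (RtoC t) = RtoC (F t).
Proof.
  unfold ext. rewrite re_RtoC, im_RtoC.
  change (0, 0) with (RtoC 0). rewrite CS_zero. simpl. f_equal. field.
Qed.

Definition box (x0 y0 r x y : R) : Prop := Rabs (x - x0) < r /\ Rabs (y - y0) < r.

Lemma deriv_quad (F : R -> R) x L r K : 0 < r ->
  (forall s, Rabs s < r -> Rabs (F (x + s) - F x - s * L) <= K * s ^ 2) -> is_derive F x L.
Proof.
  intros Hr H. apply is_derive_Reals. intros eps Heps.
  assert (HK : 0 <= K).
  { specialize (H (r/2) ltac:(rewrite Rabs_pos_eq; lra)). pose proof (Rabs_pos (F (x + r / 2) - F x - r / 2 * L)).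
    assert (0 < (r/2)^2) by (apply pow_lt; lra). nra. }
  assert (Hd : 0 < Rmin r (eps / (K + 1))) by (apply Rmin_pos; auto; apply Rdiv_lt_0_compat; lra).
  exists (mkposreal _ Hd). intros h Hh0 Hh. simpl in Hh.
  assert (Hh1 : Rabs h < r) by (eapply Rlt_le_trans; [exact Hh| apply Rmin_l]).
  assert (Hh2 : Rabs h < eps / (K + 1)) by (eapply Rlt_le_trans; [exact Hh| apply Rmin_r]).
  specialize (H h Hh1).
  replace ((F (x + h) - F x) / h - L) with ((F (x + h) - F x - h * L) / h) by (field; auto).
  unfold Rdiv. rewrite Rabs_mult, Rabs_inv.
  assert (Hpos : 0 < Rabs h) by (apply Rabs_pos_lt; auto).
  apply Rle_lt_trans with (K * h ^ 2 * / Rabs h).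
  { apply Rmult_le_compat_r. left; apply Rinv_0_lt_compat; auto. auto. }
  replace (K * h ^ 2 * / Rabs h) with (K * Rabs h).
  2: { rewrite <- (pow2_abs h). field. lra. }
  apply Rle_lt_trans with (K * (eps / (K + 1))). apply Rmult_le_compat_l; lra.
  apply Rlt_le_trans with ((K + 1) * (eps / (K + 1))). apply Rmult_lt_compat_r. apply Rdiv_lt_0_compat; lra. lra.
  right. field. lra.
Qed.

Definition QB (G Gx Gy : R -> R -> R) (x0 y0 r K : R) : Prop :=
  forall x y s, box x0 y0 r x y -> Rabs s < r ->
    Rabs (G (x + s) y - G x y - s * Gx x y) <= K * s ^ 2 /\
    Rabs (G x (y + s) - G x y - s * Gy x y) <= K * s ^ 2.

Definition LB (G : R -> R -> R) (x0 y0 r K : R) : Prop :=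
  forall x y, box x0 y0 r x y -> Rabs (G x y - G x0 y0) <= K * (Rabs (x - x0) + Rabs (y - y0)).

Lemma cont2_LB G H x0 y0 r K : 0 < r -> (forall x y, box x0 y0 r x y -> G x y = H x y) ->
  LB H x0 y0 r K -> cont2 G x0 y0.
Proof.
  intros Hr HE HL. unfold cont2. apply filterlim_locally. intros eps.
  set (K1 := Rabs K).
  assert (HK1 : 0 <= K1) by apply Rabs_pos.
  assert (Hd : 0 < Rmin r (eps / (2 * (K1 + 1)))).
  { apply Rmin_pos; auto. apply Rdiv_lt_0_compat. apply cond_pos. lra. }
  exists (mkposreal _ Hd). intros [u v] [Hu Hv]. simpl in Hu, Hv.
  change (Rabs (u - x0) < Rmin r (eps / (2 * (K1 + 1)))) in Hu.
  change (Rabs (v - y0) < Rmin r (eps / (2 * (K1 + 1)))) in Hv.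
  simpl. change (Rabs (G u v - G x0 y0) < eps).
  assert (Bu : box x0 y0 r u v).
  { split; (eapply Rlt_le_trans; [eassumption| apply Rmin_l]). }
  assert (B0 : box x0 y0 r x0 y0) by (split; rewrite Rminus_eq_0, Rabs_R0; lra).
  rewrite (HE u v Bu), (HE x0 y0 B0).
  eapply Rle_lt_trans. apply (HL u v Bu).
  assert (Rabs (u - x0) < eps / (2 * (K1 + 1))) by (eapply Rlt_le_trans; [eassumption| apply Rmin_r]).
  assert (Rabs (v - y0) < eps / (2 * (K1 + 1))) by (eapply Rlt_le_trans; [eassumption| apply Rmin_r]).
  pose proof (cond_pos eps).
  pose proof (Rabs_pos (u - x0)). pose proof (Rabs_pos (v - y0)).
  apply Rle_lt_trans with ((K1 + 1) * (Rabs (u - x0) + Rabs (v - y0))).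
  { apply Rle_trans with (K1 * (Rabs (u - x0) + Rabs (v - y0))).
    { apply Rmult_le_compat_r. lra. apply Rle_abs. } nra. }
  apply Rlt_le_trans with ((K1 + 1) * (eps / (2 * (K1 + 1)) + eps / (2 * (K1 + 1)))).
  { apply Rmult_lt_compat_l; lra. }
  right. field. lra.
Qed.

Definition C1at (g : R -> R -> R) (x y : R) : Prop :=
  ex_derive (fun t => g t y) x /\ ex_derive (fun t => g x t) y /\
  cont2 g x y /\ cont2 (dx g) x y /\ cont2 (dy g) x y.

Lemma box_mono x0 y0 r r' x y : box x0 y0 r x y -> r <= r' -> box x0 y0 r' x y.
Proof. unfold box. intros [H1 H2] H. split; lra. Qed.

Lemma box_center x0 y0 r : 0 < r -> box x0 y0 r x0 y0.
Proof. intros H. unfold box. rewrite !Rminus_eq_0, Rabs_R0. lra. Qed.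

Lemma derx_QB G H Hx Hy x0 y0 r K : 0 < r ->
  (forall x y, box x0 y0 (2 * r) x y -> G x y = H x y) -> QB H Hx Hy x0 y0 r K ->
  forall x y, box x0 y0 r x y ->
    is_derive (fun t => G t y) x (Hx x y) /\ is_derive (fun t => G x t) y (Hy x y).
Proof.
  intros Hr HE HQ x y Hb.
  assert (HB2 : box x0 y0 (2 * r) x y) by (apply (box_mono _ _ r); auto; lra).
  destruct Hb as [Hbx Hby].
  split.
  - apply (deriv_quad _ x _ r K Hr). intros s Hs.
    rewrite (HE (x + s) y), (HE x y); auto.
    + apply (HQ x y s); [split|]; auto.
    + split; [|lra]. replace (x + s - x0) with ((x - x0) + s) by ring.
      eapply Rle_lt_trans. apply Rabs_triang. lra.
  - apply (deriv_quad _ y _ r K Hr). intros s Hs.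
    rewrite (HE x (y + s)), (HE x y); auto.
    + apply (HQ x y s); [split|]; auto.
    + split; [lra|]. replace (y + s - y0) with ((y - y0) + s) by ring.
      eapply Rle_lt_trans. apply Rabs_triang. lra.
Qed.

Lemma C2_at (U G Gx Gy Gxx Gxy Gyx Gyy : R -> R -> R) x0 y0 r K : 0 < r ->
  (forall x y, box x0 y0 (4 * r) x y -> U x y = G x y) ->
  QB G Gx Gy x0 y0 (2 * r) K -> QB Gx Gxx Gxy x0 y0 r K -> QB Gy Gyx Gyy x0 y0 r K ->
  LB G x0 y0 r K -> LB Gx x0 y0 r K -> LB Gy x0 y0 r K -> LB Gxx x0 y0 r K ->
  LB Gxy x0 y0 r K -> LB Gyx x0 y0 r K -> LB Gyy x0 y0 r K ->
  C1at U x0 y0 /\ C1at (dx U) x0 y0 /\ C1at (dy U) x0 y0 /\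
  dx (dx U) x0 y0 = Gxx x0 y0 /\ dy (dy U) x0 y0 = Gyy x0 y0 /\ U x0 y0 = G x0 y0.
Proof.
  intros Hr HE Q0 Q1 Q2 L0 L1 L2 L3 L4 L5 L6.
  assert (S1 : forall x y, box x0 y0 (2 * r) x y ->
     is_derive (fun t => U t y) x (Gx x y) /\ is_derive (fun t => U x t) y (Gy x y)).
  { apply (derx_QB U G Gx Gy x0 y0 (2 * r) K). lra.
    intros x y Hb; apply HE. replace (2 * (2 * r)) with (4 * r) in Hb by ring. auto. auto. }
  assert (E1 : forall x y, box x0 y0 (2 * r) x y -> dx U x y = Gx x y /\ dy U x y = Gy x y).
  { intros x y Hb. destruct (S1 x y Hb). split; unfold dx, dy; apply is_derive_unique; auto. }
  assert (S2 : forall x y, box x0 y0 r x y ->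
     is_derive (fun t => dx U t y) x (Gxx x y) /\ is_derive (fun t => dx U x t) y (Gxy x y)).
  { apply (derx_QB (dx U) Gx Gxx Gxy x0 y0 r K); auto. intros; apply E1; auto. }
  assert (S3 : forall x y, box x0 y0 r x y ->
     is_derive (fun t => dy U t y) x (Gyx x y) /\ is_derive (fun t => dy U x t) y (Gyy x y)).
  { apply (derx_QB (dy U) Gy Gyx Gyy x0 y0 r K); auto. intros; apply E1; auto. }
  assert (E2 : forall x y, box x0 y0 r x y ->
     dx (dx U) x y = Gxx x y /\ dy (dx U) x y = Gxy x y /\ dx (dy U) x y = Gyx x y /\ dy (dy U) x y = Gyy x y).
  { intros x y Hb. destruct (S2 x y Hb), (S3 x y Hb).
    repeat split; apply is_derive_unique; auto. }
  assert (Bc : box x0 y0 r x0 y0) by (apply box_center; auto).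
  assert (Bc2 : box x0 y0 (2 * r) x0 y0) by (apply box_center; lra).
  assert (Er : forall x y, box x0 y0 r x y -> box x0 y0 (2 * r) x y) by (intros; eapply box_mono; eauto; lra).
  assert (Er4 : forall x y, box x0 y0 r x y -> box x0 y0 (4 * r) x y) by (intros; eapply box_mono; eauto; lra).
  assert (CU : cont2 U x0 y0) by (apply (cont2_LB _ G x0 y0 r K); auto).
  assert (CX : cont2 (dx U) x0 y0) by (apply (cont2_LB _ Gx x0 y0 r K); auto; intros; apply E1; auto).
  assert (CY : cont2 (dy U) x0 y0) by (apply (cont2_LB _ Gy x0 y0 r K); auto; intros; apply E1; auto).
  split. { split. eexists; apply (S1 _ _ Bc2). split. eexists; apply (S1 _ _ Bc2). auto. }
  split. { split. eexists; apply (S2 _ _ Bc). split. eexists; apply (S2 _ _ Bc). split. auto.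
    split. apply (cont2_LB _ Gxx x0 y0 r K); auto; intros; apply E2; auto.
    apply (cont2_LB _ Gxy x0 y0 r K); auto; intros; apply E2; auto. }
  split. { split. eexists; apply (S3 _ _ Bc). split. eexists; apply (S3 _ _ Bc). split. auto.
    split. apply (cont2_LB _ Gyx x0 y0 r K); auto; intros; apply E2; auto.
    apply (cont2_LB _ Gyy x0 y0 r K); auto; intros; apply E2; auto. }
  split. apply E2; auto. split. apply E2; auto. apply HE; auto.
Qed.

Definition Aff (z0 ax ay : C) (x y : R) : C := (z0 + RtoC x * ax + RtoC y * ay)%C.
Definition Phi (mu : C) (S : C -> C) (z0 ax ay : C) (x y : R) : R := Re (mu * S (Aff z0 ax ay x y))%C.

Lemma Aff_shift z0 ax ay x0 y0 x y :
  Aff z0 ax ay x y = (Aff z0 ax ay x0 y0 + RtoC (x - x0) * ax + RtoC (y - y0) * ay)%C.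
Proof. unfold Aff. rewrite !RtoC_minus. ring. Qed.

Lemma Cmod_Aff z0 ax ay x0 y0 x y :
  Cmod (Aff z0 ax ay x y) <= Cmod (Aff z0 ax ay x0 y0) + Rabs (x - x0) * Cmod ax + Rabs (y - y0) * Cmod ay.
Proof.
  rewrite (Aff_shift z0 ax ay x0 y0). eapply Rle_trans. apply Cmod_triangle.
  eapply Rle_trans. apply Rplus_le_compat_r. apply Cmod_triangle.
  rewrite !Cmod_mult, !Cmod_R. lra.
Qed.

Lemma Cmod_Aff_diff z0 ax ay x0 y0 x y :
  Cmod (Aff z0 ax ay x y - Aff z0 ax ay x0 y0)%C <= Rabs (x - x0) * Cmod ax + Rabs (y - y0) * Cmod ay.
Proof.
  rewrite (Aff_shift z0 ax ay x0 y0 x y).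
  replace (Aff z0 ax ay x0 y0 + RtoC (x - x0) * ax + RtoC (y - y0) * ay - Aff z0 ax ay x0 y0)%C
    with (RtoC (x - x0) * ax + RtoC (y - y0) * ay)%C by ring.
  eapply Rle_trans. apply Cmod_triangle. rewrite !Cmod_mult, !Cmod_R. lra.
Qed.

Lemma Re_lin (mu X Y Z : C) (s : R) :
  Re (mu * X)%C - Re (mu * Y)%C - s * Re (mu * Z)%C = Re (mu * (X - Y - RtoC s * Z))%C.
Proof. destruct mu, X, Y, Z. simpl. ring. Qed.

Lemma Re_lin2 (mu X Y : C) : Re (mu * X)%C - Re (mu * Y)%C = Re (mu * (X - Y))%C.
Proof. destruct mu, X, Y. simpl. ring. Qed.

Lemma Phi_QB mu S S' z0 ax ay x0 y0 r K R0 :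
  0 < r -> 0 <= K ->
  (forall z h, Cmod z + Cmod h <= R0 -> Cmod (S (z + h) - S z - h * S' z)%C <= K * Cmod h ^ 2) ->
  Cmod (Aff z0 ax ay x0 y0) + 2 * r * (Cmod ax + Cmod ay) <= R0 ->
  QB (Phi mu S z0 ax ay) (Phi (mu * ax) S' z0 ax ay) (Phi (mu * ay) S' z0 ax ay) x0 y0 r
     (Cmod mu * K * (Cmod ax + Cmod ay) ^ 2).
Proof.
  intros Hr HK HQ HA x y s [Hx Hy] Hs.
  pose proof (Cmod_Aff z0 ax ay x0 y0 x y) as HC.
  pose proof (Cmod_ge_0 ax). pose proof (Cmod_ge_0 ay). pose proof (Cmod_ge_0 mu).
  assert (Hxr : Rabs (x - x0) * Cmod ax <= r * Cmod ax) by (apply Rmult_le_compat_r; lra).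
  assert (Hyr : Rabs (y - y0) * Cmod ay <= r * Cmod ay) by (apply Rmult_le_compat_r; lra).
  assert (Hsa : Rabs s * Cmod ax <= r * Cmod ax) by (apply Rmult_le_compat_r; lra).
  assert (Hsb : Rabs s * Cmod ay <= r * Cmod ay) by (apply Rmult_le_compat_r; lra).
  assert (0 <= r * Cmod ax) by nra. assert (0 <= r * Cmod ay) by nra.
  split.
  - unfold Phi. replace (Aff z0 ax ay (x + s) y) with (Aff z0 ax ay x y + RtoC s * ax)%C
      by (unfold Aff; rewrite RtoC_plus; ring).
    replace (mu * ax * S' (Aff z0 ax ay x y))%C with (mu * (ax * S' (Aff z0 ax ay x y)))%C by ring.
    rewrite Re_lin.
    replace (S (Aff z0 ax ay x y + RtoC s * ax)%C - S (Aff z0 ax ay x y) - RtoC s * (ax * S' (Aff z0 ax ay x y)))%C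
      with (S (Aff z0 ax ay x y + RtoC s * ax)%C - S (Aff z0 ax ay x y) - (RtoC s * ax) * S' (Aff z0 ax ay x y))%C by ring.
    eapply Rle_trans. apply Re_le_Cmod. rewrite Cmod_mult.
    eapply Rle_trans. apply Rmult_le_compat_l. auto. apply HQ.
    { rewrite Cmod_mult, Cmod_R. lra. }
    rewrite Cmod_mult, Cmod_R. rewrite <- (pow2_abs s).
    assert (Cmod ax ^ 2 <= (Cmod ax + Cmod ay) ^ 2) by nra.
    assert (0 <= Rabs s ^ 2) by apply pow2_ge_0.
    replace (Cmod mu * (K * (Rabs s * Cmod ax) ^ 2)) with (Cmod mu * K * Cmod ax ^ 2 * Rabs s ^ 2) by ring.
    apply Rmult_le_compat_r; auto. apply Rmult_le_compat_l; auto. apply Rmult_le_pos; auto.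
  - unfold Phi. replace (Aff z0 ax ay x (y + s)) with (Aff z0 ax ay x y + RtoC s * ay)%C
      by (unfold Aff; rewrite RtoC_plus; ring).
    replace (mu * ay * S' (Aff z0 ax ay x y))%C with (mu * (ay * S' (Aff z0 ax ay x y)))%C by ring.
    rewrite Re_lin.
    replace (S (Aff z0 ax ay x y + RtoC s * ay)%C - S (Aff z0 ax ay x y) - RtoC s * (ay * S' (Aff z0 ax ay x y)))%C
      with (S (Aff z0 ax ay x y + RtoC s * ay)%C - S (Aff z0 ax ay x y) - (RtoC s * ay) * S' (Aff z0 ax ay x y))%C by ring.
    eapply Rle_trans. apply Re_le_Cmod. rewrite Cmod_mult.
    eapply Rle_trans. apply Rmult_le_compat_l. auto. apply HQ.
    { rewrite Cmod_mult, Cmod_R. lra. }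
    rewrite Cmod_mult, Cmod_R. rewrite <- (pow2_abs s).
    assert (Cmod ay ^ 2 <= (Cmod ax + Cmod ay) ^ 2) by nra.
    assert (0 <= Rabs s ^ 2) by apply pow2_ge_0.
    replace (Cmod mu * (K * (Rabs s * Cmod ay) ^ 2)) with (Cmod mu * K * Cmod ay ^ 2 * Rabs s ^ 2) by ring.
    apply Rmult_le_compat_r; auto. apply Rmult_le_compat_l; auto. apply Rmult_le_pos; auto.
Qed.

Lemma Phi_LB mu S z0 ax ay x0 y0 r L R0 :
  0 < r -> 0 <= L ->
  (forall z h, Cmod z + Cmod h <= R0 -> Cmod (S (z + h) - S z)%C <= L * Cmod h) ->
  Cmod (Aff z0 ax ay x0 y0) + r * (Cmod ax + Cmod ay) <= R0 ->
  LB (Phi mu S z0 ax ay) x0 y0 r (Cmod mu * L * (Cmod ax + Cmod ay)).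
Proof.
  intros Hr HL HS HA x y [Hx Hy].
  pose proof (Cmod_Aff_diff z0 ax ay x0 y0 x y) as HC.
  pose proof (Cmod_ge_0 ax). pose proof (Cmod_ge_0 ay). pose proof (Cmod_ge_0 mu).
  pose proof (Rabs_pos (x - x0)). pose proof (Rabs_pos (y - y0)).
  unfold Phi. rewrite Re_lin2.
  eapply Rle_trans. apply Re_le_Cmod. rewrite Cmod_mult.
  set (A0 := Aff z0 ax ay x0 y0) in *. set (A := Aff z0 ax ay x y) in *.
  replace A with (A0 + (A - A0))%C by ring.
  assert (Hxr : Rabs (x - x0) * Cmod ax <= r * Cmod ax) by (apply Rmult_le_compat_r; lra).
  assert (Hyr : Rabs (y - y0) * Cmod ay <= r * Cmod ay) by (apply Rmult_le_compat_r; lra).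
  eapply Rle_trans. apply Rmult_le_compat_l. auto. apply HS. lra.
  replace (A0 + (A - A0) - A0)%C with (A - A0)%C by ring.
  assert (Cmod (A - A0)%C <= (Cmod ax + Cmod ay) * (Rabs (x - x0) + Rabs (y - y0))).
  { eapply Rle_trans. exact HC. nra. }
  replace (Cmod mu * L * (Cmod ax + Cmod ay) * (Rabs (x - x0) + Rabs (y - y0))) with
    (Cmod mu * L * ((Cmod ax + Cmod ay) * (Rabs (x - x0) + Rabs (y - y0)))) by ring.
  rewrite <- Rmult_assoc. apply Rmult_le_compat_l. apply Rmult_le_pos; auto. auto.
Qed.

Lemma Rabs_sub_le a b : Rabs (a - b) <= Rabs a + Rabs b.
Proof. unfold Rminus. eapply Rle_trans. apply Rabs_triang. rewrite Rabs_Ropp. lra. Qed.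

Lemma QB_minus G1 G1x G1y G2 G2x G2y x0 y0 r K1 K2 :
  QB G1 G1x G1y x0 y0 r K1 -> QB G2 G2x G2y x0 y0 r K2 ->
  QB (fun x y => G1 x y - G2 x y) (fun x y => G1x x y - G2x x y) (fun x y => G1y x y - G2y x y) x0 y0 r (K1 + K2).
Proof.
  intros H1 H2 x y s Hb Hs. destruct (H1 x y s Hb Hs) as [A1 B1]. destruct (H2 x y s Hb Hs) as [A2 B2].
  split.
  - replace (G1 (x + s) y - G2 (x + s) y - (G1 x y - G2 x y) - s * (G1x x y - G2x x y)) with
      ((G1 (x + s) y - G1 x y - s * G1x x y) - (G2 (x + s) y - G2 x y - s * G2x x y)) by ring.
    eapply Rle_trans. apply Rabs_sub_le. lra.
  - replace (G1 x (y + s) - G2 x (y + s) - (G1 x y - G2 x y) - s * (G1y x y - G2y x y)) with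
      ((G1 x (y + s) - G1 x y - s * G1y x y) - (G2 x (y + s) - G2 x y - s * G2y x y)) by ring.
    eapply Rle_trans. apply Rabs_sub_le. lra.
Qed.

Lemma LB_minus G1 G2 x0 y0 r K1 K2 : LB G1 x0 y0 r K1 -> LB G2 x0 y0 r K2 ->
  LB (fun x y => G1 x y - G2 x y) x0 y0 r (K1 + K2).
Proof.
  intros H1 H2 x y Hb. specialize (H1 x y Hb). specialize (H2 x y Hb).
  replace (G1 x y - G2 x y - (G1 x0 y0 - G2 x0 y0)) with ((G1 x y - G1 x0 y0) - (G2 x y - G2 x0 y0)) by ring.
  eapply Rle_trans. apply Rabs_sub_le. lra.
Qed.

Lemma QB_mono G Gx Gy x0 y0 r r' K K' : QB G Gx Gy x0 y0 r K -> 0 < r' <= r -> K <= K' ->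
  QB G Gx Gy x0 y0 r' K'.
Proof.
  intros H Hr HK x y s Hb Hs. destruct (H x y s) as [A B].
  apply (box_mono _ _ r'); auto; lra. lra.
  assert (0 <= s ^ 2) by apply pow2_ge_0. split; eapply Rle_trans; eauto; apply Rmult_le_compat_r; auto.
Qed.

Lemma LB_mono G x0 y0 r r' K K' : LB G x0 y0 r K -> 0 < r' <= r -> K <= K' -> LB G x0 y0 r' K'.
Proof.
  intros H Hr HK x y Hb. eapply Rle_trans. apply H. apply (box_mono _ _ r'); auto; lra.
  apply Rmult_le_compat_r; auto. pose proof (Rabs_pos (x - x0)); pose proof (Rabs_pos (y - y0)); lra.
Qed.

Lemma QB_ext G Gx Gy H Hx Hy x0 y0 r K :
  (forall x y, G x y = H x y) -> (forall x y, Gx x y = Hx x y) -> (forall x y, Gy x y = Hy x y) ->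
  QB G Gx Gy x0 y0 r K -> QB H Hx Hy x0 y0 r K.
Proof. intros E1 E2 E3 HQ x y s Hb Hs. rewrite <- !E1, <- E2, <- E3. apply HQ; auto. Qed.

Lemma LB_ext G H x0 y0 r K : (forall x y, G x y = H x y) -> LB G x0 y0 r K -> LB H x0 y0 r K.
Proof. intros E HL x y Hb. rewrite <- !E. apply HL; auto. Qed.

Lemma Phi_mu_ext mu mu' S z0 ax ay : mu = mu' -> forall x y, Phi mu S z0 ax ay x y = Phi mu' S z0 ax ay x y.
Proof. intros ->. reflexivity. Qed.

Definition QC (S S' : C -> C) (R0 K : R) : Prop :=
  forall z h, Cmod z + Cmod h <= R0 -> Cmod (S (z + h) - S z - h * S' z)%C <= K * Cmod h ^ 2.
Definition LC (S : C -> C) (R0 L : R) : Prop :=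
  forall z h, Cmod z + Cmod h <= R0 -> Cmod (S (z + h) - S z)%C <= L * Cmod h.

Lemma QC_mono S S' R0 K K' : QC S S' R0 K -> K <= K' -> QC S S' R0 K'.
Proof. intros H HK z h Hz. eapply Rle_trans. apply H; auto. apply Rmult_le_compat_r; auto. apply pow2_ge_0. Qed.
Lemma LC_mono S R0 K K' : LC S R0 K -> K <= K' -> LC S R0 K'.
Proof. intros H HK z h Hz. eapply Rle_trans. apply H; auto. apply Rmult_le_compat_r; auto. apply Cmod_ge_0. Qed.

Lemma Kd_nonneg a R0 : 0 <= R0 -> Rbar_lt R0 (CV_radius a) -> 0 <= Kd a R0.
Proof. intros H0 H. unfold Kd. apply Rle_trans with (rsum (c2 a R0) 0). simpl; lra.
  apply rsum_le_Series. intros; apply c2_nonneg; auto. apply c2_ex; auto. Qed.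

Lemma CS_QC_LC a R0 : 0 <= R0 -> Rbar_lt R0 (CV_radius a) ->
  exists K, 0 <= K /\ QC (CS a) (CS (PS_derive a)) R0 K /\ LC (CS a) R0 K.
Proof.
  intros H0 H.
  pose proof (Kd_nonneg a R0 H0 H) as HK.
  assert (Ha' : Rbar_lt R0 (CV_radius (PS_derive a))) by (rewrite CV_radius_derive; auto).
  set (M := 2 * Series (absb (PS_derive a) R0)).
  assert (HM : 0 <= M).
  { unfold M. assert (0 <= Series (absb (PS_derive a) R0)).
    { apply Rle_trans with (rsum (absb (PS_derive a) R0) 0). simpl; lra.
      apply rsum_le_Series. intros; unfold absb; apply Rmult_le_pos; [apply Rabs_pos|apply pow_le; auto].
      apply absb_ex; auto. } lra. }
  exists (Kd a R0 + M + Kd a R0 * R0). split. nra. split.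
  - intros z h Hz. eapply Rle_trans. apply (CS_deriv a z h R0 H0 H Hz).
    apply Rmult_le_compat_r. apply pow2_ge_0. nra.
  - intros z h Hz. pose proof (CS_deriv a z h R0 H0 H Hz) as D.
    assert (Hz' : Cmod z <= R0) by (pose proof (Cmod_ge_0 h); lra).
    pose proof (CS_bound (PS_derive a) z R0 (absb_ex _ _ H0 Ha') Hz') as B. fold M in B.
    replace (CS a (z + h) - CS a z)%C with ((CS a (z + h) - CS a z - h * CS (PS_derive a) z) + h * CS (PS_derive a) z)%C by ring.
    eapply Rle_trans. apply Cmod_triangle. rewrite Cmod_mult.
    pose proof (Cmod_ge_0 h). assert (Cmod h <= R0) by (pose proof (Cmod_ge_0 z); lra).
    assert (Kd a R0 * Cmod h ^ 2 <= Kd a R0 * R0 * Cmod h).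
    { replace (Kd a R0 * Cmod h ^ 2) with ((Kd a R0 * Cmod h) * Cmod h) by ring.
      replace (Kd a R0 * R0 * Cmod h) with ((Kd a R0 * Cmod h) * R0) by ring.
      apply Rmult_le_compat_l; auto. apply Rmult_le_pos; auto. }
    assert (Cmod h * Cmod (CS (PS_derive a) z) <= M * Cmod h) by nra.
    nra.
Qed.

Definition D1a (a : nat -> R) := PS_derive a.
Definition D2a (a : nat -> R) := PS_derive (PS_derive a).
Definition D3a (a : nat -> R) := PS_derive (PS_derive (PS_derive a)).

Lemma CS_all a R0 : 0 <= R0 -> Rbar_lt R0 (CV_radius a) ->
  exists K, 0 <= K /\
    QC (CS a) (CS (D1a a)) R0 K /\ QC (CS (D1a a)) (CS (D2a a)) R0 K /\ QC (CS (D2a a)) (CS (D3a a)) R0 K /\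
    LC (CS a) R0 K /\ LC (CS (D1a a)) R0 K /\ LC (CS (D2a a)) R0 K.
Proof.
  intros H0 H.
  destruct (CS_QC_LC a R0 H0 H) as [K0 [HK0 [Q0 L0]]].
  destruct (CS_QC_LC (D1a a) R0 H0 ltac:(unfold D1a; rewrite CV_radius_derive; auto)) as [K1 [HK1 [Q1 L1]]].
  destruct (CS_QC_LC (D2a a) R0 H0 ltac:(unfold D2a; rewrite !CV_radius_derive; auto)) as [K2 [HK2 [Q2 L2]]].
  exists (K0 + K1 + K2). split. lra.
  repeat split; first [eapply QC_mono; [eassumption|lra] | eapply LC_mono; [eassumption|lra]].
Qed.

Lemma seg_C1 (U Gu Gux Guy Gl Glx Gly : R -> R -> R) x0 rb K : 0 < rb ->
  (forall x y, box x0 0 (2 * rb) x y -> 0 < y -> U x y = Gu x y) ->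
  (forall x y, box x0 0 (2 * rb) x y -> y <= 0 -> U x y = Gl x y) ->
  QB Gu Gux Guy x0 0 rb K -> QB Gl Glx Gly x0 0 rb K ->
  (forall x, Rabs (x - x0) < rb -> Gu x 0 = Gl x 0) ->
  (forall x, Rabs (x - x0) < rb -> Guy x 0 = Gly x 0) ->
  Gux x0 0 = Glx x0 0 ->
  LB Gu x0 0 rb K -> LB Gux x0 0 rb K -> LB Guy x0 0 rb K ->
  LB Gl x0 0 rb K -> LB Glx x0 0 rb K -> LB Gly x0 0 rb K ->
  C1at U x0 0.
Proof.
  intros Hrb EQu EQl Qu Ql M0 My Mx LGu LGux LGuy LGl LGlx LGly.
  set (Dx := fun x y => if Rlt_dec 0 y then Gux x y else Glx x y).
  set (Dy := fun x y => if Rlt_dec 0 y then Guy x y else Gly x y).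
  assert (Hder : forall x y, box x0 0 rb x y ->
     is_derive (fun t => U t y) x (Dx x y) /\ is_derive (fun t => U x t) y (Dy x y)).
  { intros x y Hb. pose proof Hb as [Hbx Hby]. unfold Dx, Dy.
    assert (B2 : forall s, Rabs s < rb -> box x0 0 (2 * rb) (x + s) y).
    { intros s Hs. split; [|lra]. replace (x + s - x0) with ((x - x0) + s) by ring.
      eapply Rle_lt_trans. apply Rabs_triang. lra. }
    assert (B3 : forall s, Rabs s < rb -> box x0 0 (2 * rb) x (y + s)).
    { intros s Hs. split; [lra|]. replace (y + s - 0) with ((y - 0) + s) by ring.
      eapply Rle_lt_trans. apply Rabs_triang. lra. }
    assert (B0 : box x0 0 (2 * rb) x y) by (eapply box_mono; eauto; lra).
    destruct (Rlt_dec 0 y) as [Hy|Hy].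
    - split.
      + apply (deriv_quad _ x _ rb K Hrb). intros s Hs.
        rewrite EQu, (EQu x y); auto. apply (Qu x y s Hb Hs).
      + assert (Hm : 0 < Rmin rb y) by (apply Rmin_pos; lra).
        apply (deriv_quad _ y _ (Rmin rb y) K Hm). intros s Hs.
        assert (Hs1 : Rabs s < rb) by (eapply Rlt_le_trans; [exact Hs| apply Rmin_l]).
        assert (Hs2 : Rabs s < y) by (eapply Rlt_le_trans; [exact Hs| apply Rmin_r]).
        rewrite EQu, (EQu x y); auto. apply (Qu x y s Hb Hs1).
        apply Rabs_def2 in Hs2. lra.
    - destruct (Req_dec y 0) as [Hy0|Hy0].
      + subst y. split.
        * apply (deriv_quad _ x _ rb K Hrb). intros s Hs.
          rewrite EQl, (EQl x 0); auto; try lra. apply (Ql x 0 s Hb Hs).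
        * apply (deriv_quad _ 0 _ rb K Hrb). intros s Hs.
          rewrite (EQl x 0) by (auto; lra).
          destruct (Rlt_dec 0 s) as [Hs0|Hs0].
          -- rewrite (EQu x (0 + s)); auto; [|lra]. rewrite <- (M0 x Hbx), <- (My x Hbx).
             apply (Qu x 0 s Hb Hs).
          -- rewrite (EQl x (0 + s)); auto; [|lra]. apply (Ql x 0 s Hb Hs).
      + assert (Hyn : y < 0) by lra. split.
        * apply (deriv_quad _ x _ rb K Hrb). intros s Hs.
          rewrite EQl, (EQl x y); auto; try lra. apply (Ql x y s Hb Hs).
        * assert (Hm : 0 < Rmin rb (- y)) by (apply Rmin_pos; lra).
          apply (deriv_quad _ y _ (Rmin rb (-y)) K Hm). intros s Hs.
          assert (Hs1 : Rabs s < rb) by (eapply Rlt_le_trans; [exact Hs| apply Rmin_l]).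
          assert (Hs2 : Rabs s < - y) by (eapply Rlt_le_trans; [exact Hs| apply Rmin_r]).
          rewrite EQl, (EQl x y); auto; try lra. apply (Ql x y s Hb Hs1).
          apply Rabs_def2 in Hs2. lra. }
  assert (Bc : box x0 0 rb x0 0) by (apply box_center; auto).
  assert (Edx : forall x y, box x0 0 rb x y -> dx U x y = Dx x y) by (intros; apply is_derive_unique; apply Hder; auto).
  assert (Edy : forall x y, box x0 0 rb x y -> dy U x y = Dy x y) by (intros; apply is_derive_unique; apply Hder; auto).
  assert (HU0 : U x0 0 = Gl x0 0).
  { apply EQl; [eapply box_mono; eauto; lra | lra]. }
  split. eexists; apply (Hder _ _ Bc). split. eexists; apply (Hder _ _ Bc). split.
  - apply (cont2_LB U U x0 0 rb K); auto. intros x y Hb. rewrite HU0.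
    assert (Hb2 : box x0 0 (2 * rb) x y) by (eapply box_mono; eauto; lra).
    destruct (Rlt_dec 0 y) as [Hy|Hy].
    + rewrite (EQu x y Hb2 Hy). rewrite <- M0 by (rewrite Rminus_eq_0, Rabs_R0; auto). apply LGu; auto.
    + rewrite (EQl x y Hb2 ltac:(lra)). apply LGl; auto.
  - split.
    + apply (cont2_LB _ Dx x0 0 rb K); auto. intros x y Hb. unfold Dx at 2.
      destruct (Rlt_dec 0 0) as [h|h]; [lra|]. unfold Dx.
      destruct (Rlt_dec 0 y). rewrite <- Mx. apply LGux; auto. apply LGlx; auto.
    + apply (cont2_LB _ Dy x0 0 rb K); auto. intros x y Hb. unfold Dy at 2.
      destruct (Rlt_dec 0 0) as [h|h]; [lra|]. unfold Dy.
      destruct (Rlt_dec 0 y). rewrite <- My. apply LGuy; auto. rewrite Rminus_eq_0, Rabs_R0; auto.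
      apply LGly; auto.
Qed.

Definition LD (f : R -> R) (c : R) (a : nat -> R) (r : R) : Prop :=
  0 < r /\ Rbar_lt r (CV_radius a) /\ forall x, Rabs (x - c) < r -> f x = PSeries a (x - c).

Lemma LD_of_analytic f c : analytic_at f c -> exists a r, LD f c a r.
Proof.
  intros [a [r0 [Hr0 H]]]. exists a, (r0 / 2). split; [lra|split].
  - assert (Hb : Rbar_le (3 * r0 / 4) (CV_radius a)).
    { destruct (CV_radius_bounded a) as [Hub _]. apply Hub.
      specialize (H (c + 3 * r0 / 4) ltac:(replace (c + 3 * r0 / 4 - c) with (3 * r0 / 4) by ring; rewrite Rabs_pos_eq; lra)).
      replace (c + 3 * r0 / 4 - c) with (3 * r0 / 4) in H by ring.
      apply is_pseries_R in H.
      assert (Hl : is_lim_seq (fun n => a n * (3 * r0 / 4) ^ n) 0) by (apply ex_series_lim_0; eexists; eauto).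
      destruct (filterlim_bounded (fun n => a n * (3 * r0 / 4) ^ n)) as [M HM].
      { exists 0. exact Hl. }
      exists M. intros n. apply HM. }
    eapply Rbar_lt_le_trans; [|exact Hb]. simpl. lra.
  - intros x Hx. symmetry. apply is_pseries_unique. apply H. lra.
Qed.

Lemma LD_ext f c a r : LD f c a r -> forall w, Rabs (Re w - c) + Rabs (Im w) < r -> ext f w = CS a (w - RtoC c)%C.
Proof. intros [H1 [H2 H3]]. apply ext_local; auto. Qed.

Lemma LD_real f c a r : LD f c a r -> forall t, Rabs (t - c) < r -> f t = Re (CS a (RtoC (t - c))).
Proof. intros [H1 [H2 H3]] t Ht. rewrite Re_CS_real. auto. Qed.

Lemma Re_quad (S S' : C -> C) (t s : R) :
  Re (S (RtoC (t + s))) - Re (S (RtoC t)) - s * Re (S' (RtoC t)) =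
  Re (S (RtoC t + RtoC s) - S (RtoC t) - RtoC s * S' (RtoC t))%C.
Proof. rewrite RtoC_plus. rewrite !ReM, re_scal_l. ring. Qed.

Lemma LD_deriv f c a r : LD f c a r -> forall t, Rabs (t - c) < r ->
  is_derive f t (Re (CS (D1a a) (RtoC (t - c)))).
Proof.
  intros HL t Ht. destruct HL as [H1 [H2 H3]].
  destruct (CS_QC_LC a r ltac:(lra) H2) as [K [HK [Q _]]].
  apply (deriv_quad _ t _ (r - Rabs (t - c)) K). lra.
  intros s Hs.
  rewrite (LD_real f c a r (conj H1 (conj H2 H3)) (t + s)).
  2: { replace (t + s - c) with ((t - c) + s) by ring. eapply Rle_lt_trans. apply Rabs_triang. lra. }
  rewrite (LD_real f c a r (conj H1 (conj H2 H3)) t Ht).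
  replace (t + s - c) with ((t - c) + s) by ring.
  rewrite (Re_quad (CS a) (CS (D1a a)) (t - c) s).
  eapply Rle_trans. apply Re_le_Cmod. rewrite <- (pow2_abs s), <- (Cmod_R s).
  apply Q. rewrite !Cmod_R. lra.
Qed.

Lemma LD_Derive f c a r : LD f c a r -> forall t, Rabs (t - c) < r ->
  Derive f t = Re (CS (D1a a) (RtoC (t - c))).
Proof. intros. apply is_derive_unique. apply (LD_deriv f c a r); auto. Qed.

Lemma uniform_LD f : analytic_near_m10 f ->
  exists delta, 0 < delta /\ forall t, -1 <= t <= 0 ->
    exists c a r, LD f c a r /\ Rabs (t - c) < r / 4 /\ 8 * delta <= r.
Proof.
  intros [eps [Heps Han]].
  assert (Hex : forall c, exists r, 0 < r /\ (-1 <= c <= 0 -> exists a, LD f c a r)).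
  { intros c. destruct (Rle_dec (-1) c) as [h1|h1]; [destruct (Rle_dec c 0) as [h2|h2]|].
    - destruct (LD_of_analytic f c (Han c ltac:(lra))) as [a [r Hr]].
      exists r. split. apply Hr. intros _. exists a. auto.
    - exists 1. split. lra. intros; lra.
    - exists 1. split. lra. intros; lra. }
  set (rad := fun c => proj1_sig (constructive_indefinite_description _ (Hex c))).
  assert (Hrad : forall c, 0 < rad c /\ (-1 <= c <= 0 -> exists a, LD f c a (rad c))).
  { intros c. unfold rad. destruct (constructive_indefinite_description _ (Hex c)). simpl. auto. }
  set (fam := mkfamily (fun c => -1 <= c <= 0) (fun c x => (-1 <= c <= 0) /\ Rabs (x - c) < rad c / 4)
                (fun c H => match H with ex_intro _ H0 => proj1 H0 end)).
  assert (Hcov : covering_open_set (fun c => -1 <= c <= 0) fam).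
  { split.
    - intros x Hx. exists x. simpl. split; auto. rewrite Rminus_eq_0, Rabs_R0. pose proof (proj1 (Hrad x)). lra.
    - intros c x [Hc Hx]. simpl in Hc, Hx.
      assert (He : 0 < rad c / 4 - Rabs (x - c)) by lra.
      exists (mkposreal _ He). intros y Hy. unfold disc in Hy. simpl in Hy. simpl. split; auto.
      replace (y - c) with ((y - x) + (x - c)) by ring. eapply Rle_lt_trans. apply Rabs_triang. lra. }
  destruct (compact_P3 (-1) 0 fam Hcov) as [D [HcovD [l Hl]]].
  set (delta := fold_right (fun y m => Rmin (rad y / 8) m) 1 l).
  assert (Hdpos : 0 < delta).
  { unfold delta. clear Hl. induction l; simpl. lra. apply Rmin_pos; auto. pose proof (proj1 (Hrad a)). lra. }
  assert (Hdle : forall y, In y l -> delta <= rad y / 8).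
  { unfold delta. clear Hl Hdpos delta. induction l; simpl; intros y Hy. contradiction.
    destruct Hy as [<-|Hy]. apply Rmin_l. eapply Rle_trans. apply Rmin_r. auto. }
  exists delta. split; auto. intros t Ht.
  destruct (HcovD t Ht) as [y [[Hy1 Hy2] HDy]]. simpl in Hy1, Hy2.
  assert (Hin : In y l) by (apply Hl; simpl; split; auto).
  destruct (proj2 (Hrad y) Hy1) as [a Ha].
  exists y, a, (rad y). split; auto. split; auto. specialize (Hdle y Hin). lra.
Qed.

Definition wpt (x y : R) : C := Cmult (Cminus (x, y) (RtoC 1)) (RtoC (/ 2)).

Definition Ufun (f : R -> R) (x y : R) : R :=
  if Rle_dec y 0 then f ((x - y - 1) / 2) - f ((x + y - 1) / 2)
  else Re (Cmult Ci (Cminus (ext f (wpt x y)) (ext f (wpt x (- y))))).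

Lemma wpt_Re x y : Re (wpt x y) = (x - 1) / 2.
Proof. unfold wpt. simpl. field. Qed.
Lemma wpt_Im x y : Im (wpt x y) = y / 2.
Proof. unfold wpt. simpl. field. Qed.
Lemma wpt_conj x y : wpt x (- y) = Cconj (wpt x y).
Proof. apply C_eq; rewrite ?re_conj, ?im_conj, ?wpt_Re, ?wpt_Im, ?wpt_Im; auto. field. Qed.

Lemma U_up f x y : 0 < y -> Ufun f x y = Re ((2 * Ci) * ext f (wpt x y))%C.
Proof.
  intros Hy. unfold Ufun. destruct (Rle_dec y 0); [lra|].
  rewrite wpt_conj, ext_conj. destruct (ext f (wpt x y)) as [p q]. simpl. ring.
Qed.

Lemma U_low f x y : y <= 0 -> Ufun f x y = f ((x - y - 1) / 2) - f ((x + y - 1) / 2).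
Proof. intros Hy. unfold Ufun. destruct (Rle_dec y 0); [auto|lra]. Qed.

Lemma Cmod_half : Cmod (RtoC (1/2)) = 1/2.
Proof. rewrite Cmod_R. rewrite Rabs_pos_eq; lra. Qed.
Lemma Cmod_ihalf : Cmod (0, 1/2) = 1/2.
Proof. rewrite Cmod_im. rewrite Rabs_pos_eq; lra. Qed.
Lemma Cmod_mhalf : Cmod (RtoC (-1/2)) = 1/2.
Proof. rewrite Cmod_R. rewrite Rabs_left; lra. Qed.

Lemma Re_sum2 (m1 m2 X : C) : Re (m1 * X)%C + Re (m2 * X)%C = Re ((m1 + m2) * X)%C.
Proof. destruct m1, m2, X; simpl; ring. Qed.

Lemma Rabs_half_le u u0 : Rabs ((u - 1) / 2 - ((u0 - 1) / 2)) = Rabs (u - u0) / 2.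
Proof. replace ((u - 1) / 2 - (u0 - 1) / 2) with ((u - u0) * / 2) by field.
  rewrite Rabs_mult, Rabs_inv, (Rabs_pos_eq 2) by lra. field. Qed.

Lemma upper_point f c a r x0 y0 rb : LD f c a r -> 0 < rb -> 4 * rb < y0 ->
  Rabs ((x0 - 1) / 2 - c) + y0 / 2 + 8 * rb < r ->
  C1at (Ufun f) x0 y0 /\ C1at (dx (Ufun f)) x0 y0 /\ C1at (dy (Ufun f)) x0 y0 /\
  dx (dx (Ufun f)) x0 y0 + dy (dy (Ufun f)) x0 y0 = 0.
Proof.
  intros HLD Hrb Hy0 Hc. pose proof HLD as [Hr [Hrad _]].
  destruct (CS_all a r ltac:(lra) Hrad) as [K [HK [Q0 [Q1 [Q2 [L0 [L1 L2]]]]]]].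
  set (z0 := RtoC (-1/2 - c)). set (ax := RtoC (1/2)). set (ay := (0, 1/2) : C).
  assert (Hs : Cmod ax + Cmod ay = 1) by (unfold ax, ay; rewrite Cmod_half, Cmod_ihalf; lra).
  assert (HAff : forall x y, Aff z0 ax ay x y = (wpt x y - RtoC c)%C).
  { intros x y. apply C_eq; unfold Aff, z0, ax, ay; rewrite ?ReM, ?ImM, ?wpt_Re, ?wpt_Im; simpl; field. }
  assert (HA0 : Cmod (Aff z0 ax ay x0 y0) <= Rabs ((x0 - 1) / 2 - c) + y0 / 2).
  { rewrite HAff. eapply Rle_trans. apply Cmod_le_abs. rewrite ReM, ImM, wpt_Re, wpt_Im. simpl.
    rewrite Rminus_0_r, (Rabs_pos_eq (y0/2)) by lra. lra. }
  set (mu := (2 * Ci)%C).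
  assert (EQ : forall x y, box x0 y0 (4 * rb) x y -> Ufun f x y = Phi mu (CS a) z0 ax ay x y).
  { intros x y [Hx Hy]. assert (Hyp : 0 < y) by (apply Rabs_def2 in Hy; lra).
    rewrite U_up by auto. unfold Phi. rewrite HAff. f_equal. f_equal.
    apply (LD_ext f c a r HLD). rewrite wpt_Re, wpt_Im.
    rewrite (Rabs_pos_eq (y/2)) by lra.
    replace ((x - 1) / 2 - c) with (((x - 1) / 2 - (x0 - 1) / 2) + ((x0 - 1) / 2 - c)) by ring.
    pose proof (Rabs_triang ((x - 1) / 2 - (x0 - 1) / 2) ((x0 - 1) / 2 - c)).
    rewrite Rabs_half_le in H. apply Rabs_def2 in Hy. lra. }
  set (m1 := (mu * ax)%C). set (m2 := (mu * ay)%C).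
  set (m11 := (m1 * ax)%C). set (m12 := (m1 * ay)%C). set (m21 := (m2 * ax)%C). set (m22 := (m2 * ay)%C).
  set (Msum := Cmod mu + Cmod m1 + Cmod m2 + Cmod m11 + Cmod m12 + Cmod m21 + Cmod m22).
  assert (Hm : 0 <= Cmod mu /\ 0 <= Cmod m1 /\ 0 <= Cmod m2 /\ 0 <= Cmod m11 /\ 0 <= Cmod m12 /\ 0 <= Cmod m21 /\ 0 <= Cmod m22)
    by (repeat split; apply Cmod_ge_0).
  set (Kb := Msum * K).
  assert (HKb : forall m, 0 <= Cmod m -> Cmod m <= Msum -> Cmod m * K * (Cmod ax + Cmod ay) ^ 2 <= Kb /\ Cmod m * K * (Cmod ax + Cmod ay) <= Kb).
  { intros m Hm0 HmM. rewrite Hs. unfold Kb. split; nra. }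
  assert (Hr2 : Cmod (Aff z0 ax ay x0 y0) + 2 * (2 * rb) * (Cmod ax + Cmod ay) <= r) by (rewrite Hs; lra).
  assert (Hr1 : Cmod (Aff z0 ax ay x0 y0) + 2 * rb * (Cmod ax + Cmod ay) <= r) by (rewrite Hs; lra).
  assert (Hr0 : Cmod (Aff z0 ax ay x0 y0) + rb * (Cmod ax + Cmod ay) <= r) by (rewrite Hs; lra).
  destruct Hm as [H0 [H1 [H2 [H3 [H4 [H5 H6]]]]]].
  destruct (C2_at (Ufun f) (Phi mu (CS a) z0 ax ay)
     (Phi m1 (CS (D1a a)) z0 ax ay) (Phi m2 (CS (D1a a)) z0 ax ay)
     (Phi m11 (CS (D2a a)) z0 ax ay) (Phi m12 (CS (D2a a)) z0 ax ay)
     (Phi m21 (CS (D2a a)) z0 ax ay) (Phi m22 (CS (D2a a)) z0 ax ay) x0 y0 rb Kb) as [C0 [C1 [C2 [E1 [E2 _]]]]];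
   auto.
  - eapply QB_mono. apply (Phi_QB mu (CS a) (CS (D1a a)) z0 ax ay x0 y0 (2 * rb) K r); auto; lra. lra.
    apply HKb; unfold Msum; lra.
  - eapply QB_mono. apply (Phi_QB m1 (CS (D1a a)) (CS (D2a a)) z0 ax ay x0 y0 rb K r); auto. lra.
    apply HKb; unfold Msum; lra.
  - eapply QB_mono. apply (Phi_QB m2 (CS (D1a a)) (CS (D2a a)) z0 ax ay x0 y0 rb K r); auto. lra.
    apply HKb; unfold Msum; lra.
  - eapply LB_mono. apply (Phi_LB mu (CS a) z0 ax ay x0 y0 rb K r); auto. lra. apply HKb; unfold Msum; lra.
  - eapply LB_mono. apply (Phi_LB m1 (CS (D1a a)) z0 ax ay x0 y0 rb K r); auto. lra. apply HKb; unfold Msum; lra.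
  - eapply LB_mono. apply (Phi_LB m2 (CS (D1a a)) z0 ax ay x0 y0 rb K r); auto. lra. apply HKb; unfold Msum; lra.
  - eapply LB_mono. apply (Phi_LB m11 (CS (D2a a)) z0 ax ay x0 y0 rb K r); auto. lra. apply HKb; unfold Msum; lra.
  - eapply LB_mono. apply (Phi_LB m12 (CS (D2a a)) z0 ax ay x0 y0 rb K r); auto. lra. apply HKb; unfold Msum; lra.
  - eapply LB_mono. apply (Phi_LB m21 (CS (D2a a)) z0 ax ay x0 y0 rb K r); auto. lra. apply HKb; unfold Msum; lra.
  - eapply LB_mono. apply (Phi_LB m22 (CS (D2a a)) z0 ax ay x0 y0 rb K r); auto. lra. apply HKb; unfold Msum; lra.
  - split; auto. split; auto. split; auto.
    rewrite E1, E2. unfold Phi. rewrite Re_sum2.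
    replace (m11 + m22)%C with (RtoC 0). rewrite Cmult_0_l. reflexivity.
    unfold m11, m22, m1, m2, mu, ax, ay. apply C_eq; simpl; field.
Qed.

Lemma Cmod_realIm z : Im z = 0 -> Cmod z = Rabs (Re z).
Proof. destruct z as [p q]. simpl. intros ->. apply Cmod_R. Qed.

Lemma real_chart f c a r z0 ax ay x y : LD f c a r ->
  z0 = RtoC (-1/2 - c) -> ax = RtoC (1/2) -> (ay = RtoC (-1/2) \/ ay = RtoC (1/2)) ->
  Rabs (Re (Aff z0 ax ay x y)) < r ->
  Phi 1 (CS a) z0 ax ay x y = f (Re (Aff z0 ax ay x y) + c).
Proof.
  intros HLD Hz Hax Hay Hb. rewrite (LD_real f c a r HLD).
  - unfold Phi. rewrite Cmult_1_l. f_equal. f_equal. apply C_eq.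
    + simpl. ring.
    + rewrite im_RtoC. subst. destruct Hay; subst; simpl; ring.
  - replace (Re (Aff z0 ax ay x y) + c - c) with (Re (Aff z0 ax ay x y)) by ring. auto.
Qed.

Lemma lower_point f c1 a1 r1 c2 a2 r2 x0 y0 rb : LD f c1 a1 r1 -> LD f c2 a2 r2 -> 0 < rb -> 4 * rb < - y0 ->
  Rabs ((x0 - y0 - 1) / 2 - c1) + 8 * rb < r1 -> Rabs ((x0 + y0 - 1) / 2 - c2) + 8 * rb < r2 ->
  C1at (Ufun f) x0 y0 /\ C1at (dx (Ufun f)) x0 y0 /\ C1at (dy (Ufun f)) x0 y0 /\
  dx (dx (Ufun f)) x0 y0 - dy (dy (Ufun f)) x0 y0 = 0.
Proof.
  intros HL1 HL2 Hrb Hy0 Hc1 Hc2. pose proof HL1 as [Hr1 [Hrad1 _]]. pose proof HL2 as [Hr2 [Hrad2 _]].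
  destruct (CS_all a1 r1 ltac:(lra) Hrad1) as [K1 [HK1 [Q10 [Q11 [Q12 [L10 [L11 L12]]]]]]].
  destruct (CS_all a2 r2 ltac:(lra) Hrad2) as [K2 [HK2 [Q20 [Q21 [Q22 [L20 [L21 L22]]]]]]].
  set (z1 := RtoC (-1/2 - c1)). set (z2 := RtoC (-1/2 - c2)).
  set (ax := RtoC (1/2)). set (ay1 := RtoC (-1/2)). set (ay2 := RtoC (1/2)).
  assert (Hs1 : Cmod ax + Cmod ay1 = 1) by (unfold ax, ay1; rewrite Cmod_half, Cmod_mhalf; lra).
  assert (Hs2 : Cmod ax + Cmod ay2 = 1) by (unfold ax, ay2; rewrite Cmod_half; lra).
  assert (Re1 : forall x y, Re (Aff z1 ax ay1 x y) = (x - y - 1) / 2 - c1) by (intros; unfold Aff, z1, ax, ay1; simpl; field).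
  assert (Re2 : forall x y, Re (Aff z2 ax ay2 x y) = (x + y - 1) / 2 - c2) by (intros; unfold Aff, z2, ax, ay2; simpl; field).
  assert (Ca1 : Cmod (Aff z1 ax ay1 x0 y0) = Rabs ((x0 - y0 - 1) / 2 - c1)).
  { rewrite <- (Re1 x0 y0). apply Cmod_realIm. unfold Aff, z1, ax, ay1; simpl; field. }
  assert (Ca2 : Cmod (Aff z2 ax ay2 x0 y0) = Rabs ((x0 + y0 - 1) / 2 - c2)).
  { rewrite <- (Re2 x0 y0). apply Cmod_realIm. unfold Aff, z2, ax, ay2; simpl; field. }
  assert (EQ : forall x y, box x0 y0 (4 * rb) x y ->
     Ufun f x y = (fun x y => Phi 1 (CS a1) z1 ax ay1 x y - Phi 1 (CS a2) z2 ax ay2 x y) x y).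
  { intros x y [Hx Hy]. apply Rabs_def2 in Hx. apply Rabs_def2 in Hy.
    rewrite U_low by lra. simpl.
    rewrite (real_chart f c1 a1 r1 z1 ax ay1 x y HL1); auto.
    rewrite (real_chart f c2 a2 r2 z2 ax ay2 x y HL2); auto.
    rewrite Re1, Re2. f_equal; f_equal; ring.
    - rewrite Re2. replace ((x + y - 1) / 2 - c2) with (((x - x0) + (y - y0)) / 2 + ((x0 + y0 - 1) / 2 - c2)) by field.
      eapply Rle_lt_trans. apply Rabs_triang. rewrite Rabs_div by lra. rewrite (Rabs_pos_eq 2) by lra.
      assert (Rabs (x - x0 + (y - y0)) < 8 * rb).
      { eapply Rle_lt_trans. apply Rabs_triang. assert (Rabs (x - x0) < 4 * rb) by (apply Rabs_def1; lra).
        assert (Rabs (y - y0) < 4 * rb) by (apply Rabs_def1; lra). lra. }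
      lra.
    - rewrite Re1. replace ((x - y - 1) / 2 - c1) with (((x - x0) - (y - y0)) / 2 + ((x0 - y0 - 1) / 2 - c1)) by field.
      eapply Rle_lt_trans. apply Rabs_triang. rewrite Rabs_div by lra. rewrite (Rabs_pos_eq 2) by lra.
      assert (Rabs (x - x0 - (y - y0)) < 8 * rb).
      { eapply Rle_lt_trans. apply Rabs_sub_le. assert (Rabs (x - x0) < 4 * rb) by (apply Rabs_def1; lra).
        assert (Rabs (y - y0) < 4 * rb) by (apply Rabs_def1; lra). lra. }
      lra. }
  assert (Cax : Cmod ax = 1/2) by (unfold ax; apply Cmod_half).
  assert (Cay1 : Cmod ay1 = 1/2) by (unfold ay1; apply Cmod_mhalf).
  assert (Cay2 : Cmod ay2 = 1/2) by (unfold ay2; apply Cmod_half).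
  assert (C1 : Cmod 1 = 1) by apply Cmod_1.
  set (Kb := K1 + K2).
  assert (HKq : forall m K, Cmod m <= 1 -> 0 <= K -> Cmod m * K * 1 ^ 2 <= K) by (intros; pose proof (Cmod_ge_0 m); nra).
  assert (HKl : forall m K, Cmod m <= 1 -> 0 <= K -> Cmod m * K * 1 <= K) by (intros; pose proof (Cmod_ge_0 m); nra).
  assert (Hr21 : Cmod (Aff z1 ax ay1 x0 y0) + 2 * (2 * rb) * (Cmod ax + Cmod ay1) <= r1) by (rewrite Hs1, Ca1; lra).
  assert (Hr11 : Cmod (Aff z1 ax ay1 x0 y0) + 2 * rb * (Cmod ax + Cmod ay1) <= r1) by (rewrite Hs1, Ca1; lra).
  assert (Hr01 : Cmod (Aff z1 ax ay1 x0 y0) + rb * (Cmod ax + Cmod ay1) <= r1) by (rewrite Hs1, Ca1; lra).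
  assert (Hr22 : Cmod (Aff z2 ax ay2 x0 y0) + 2 * (2 * rb) * (Cmod ax + Cmod ay2) <= r2) by (rewrite Hs2, Ca2; lra).
  assert (Hr12 : Cmod (Aff z2 ax ay2 x0 y0) + 2 * rb * (Cmod ax + Cmod ay2) <= r2) by (rewrite Hs2, Ca2; lra).
  assert (Hr02 : Cmod (Aff z2 ax ay2 x0 y0) + rb * (Cmod ax + Cmod ay2) <= r2) by (rewrite Hs2, Ca2; lra).
  destruct (C2_at (Ufun f) (fun x y => Phi 1 (CS a1) z1 ax ay1 x y - Phi 1 (CS a2) z2 ax ay2 x y)
     (fun x y => Phi (1 * ax) (CS (D1a a1)) z1 ax ay1 x y - Phi (1 * ax) (CS (D1a a2)) z2 ax ay2 x y)
     (fun x y => Phi (1 * ay1) (CS (D1a a1)) z1 ax ay1 x y - Phi (1 * ay2) (CS (D1a a2)) z2 ax ay2 x y)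
     (fun x y => Phi (1 * ax * ax) (CS (D2a a1)) z1 ax ay1 x y - Phi (1 * ax * ax) (CS (D2a a2)) z2 ax ay2 x y)
     (fun x y => Phi (1 * ax * ay1) (CS (D2a a1)) z1 ax ay1 x y - Phi (1 * ax * ay2) (CS (D2a a2)) z2 ax ay2 x y)
     (fun x y => Phi (1 * ay1 * ax) (CS (D2a a1)) z1 ax ay1 x y - Phi (1 * ay2 * ax) (CS (D2a a2)) z2 ax ay2 x y)
     (fun x y => Phi (1 * ay1 * ay1) (CS (D2a a1)) z1 ax ay1 x y - Phi (1 * ay2 * ay2) (CS (D2a a2)) z2 ax ay2 x y)
     x0 y0 rb Kb) as [C0 [C1' [C2 [E1 [E2 _]]]]]; auto.
  - eapply QB_mono; [apply QB_minus;
       [apply (Phi_QB 1 (CS a1) (CS (D1a a1)) z1 ax ay1 x0 y0 (2 * rb) K1 r1) | apply (Phi_QB 1 (CS a2) (CS (D1a a2)) z2 ax ay2 x0 y0 (2 * rb) K2 r2)]; auto; lra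
     | lra | rewrite Hs1, Hs2; unfold Kb; apply Rplus_le_compat; apply HKq; auto; rewrite ?Cmod_mult; nra].
  - eapply QB_mono; [apply QB_minus;
       [apply (Phi_QB (1 * ax) (CS (D1a a1)) (CS (D2a a1)) z1 ax ay1 x0 y0 rb K1 r1) | apply (Phi_QB (1 * ax) (CS (D1a a2)) (CS (D2a a2)) z2 ax ay2 x0 y0 rb K2 r2)]; auto; lra
     | lra | rewrite Hs1, Hs2; unfold Kb; apply Rplus_le_compat; apply HKq; auto; rewrite ?Cmod_mult; nra].
  - eapply QB_mono; [apply QB_minus;
       [apply (Phi_QB (1 * ay1) (CS (D1a a1)) (CS (D2a a1)) z1 ax ay1 x0 y0 rb K1 r1) | apply (Phi_QB (1 * ay2) (CS (D1a a2)) (CS (D2a a2)) z2 ax ay2 x0 y0 rb K2 r2)]; auto; lra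
     | lra | rewrite Hs1, Hs2; unfold Kb; apply Rplus_le_compat; apply HKq; auto; rewrite ?Cmod_mult; nra].
  - eapply LB_mono; [apply LB_minus;
       [apply (Phi_LB 1 (CS a1) z1 ax ay1 x0 y0 rb K1 r1) | apply (Phi_LB 1 (CS a2) z2 ax ay2 x0 y0 rb K2 r2)]; auto; lra
     | lra | rewrite Hs1, Hs2; unfold Kb; apply Rplus_le_compat; apply HKl; auto; rewrite ?Cmod_mult; nra].
  - eapply LB_mono; [apply LB_minus;
       [apply (Phi_LB (1 * ax) (CS (D1a a1)) z1 ax ay1 x0 y0 rb K1 r1) | apply (Phi_LB (1 * ax) (CS (D1a a2)) z2 ax ay2 x0 y0 rb K2 r2)]; auto; lra
     | lra | rewrite Hs1, Hs2; unfold Kb; apply Rplus_le_compat; apply HKl; auto; rewrite ?Cmod_mult; nra].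
  - eapply LB_mono; [apply LB_minus;
       [apply (Phi_LB (1 * ay1) (CS (D1a a1)) z1 ax ay1 x0 y0 rb K1 r1) | apply (Phi_LB (1 * ay2) (CS (D1a a2)) z2 ax ay2 x0 y0 rb K2 r2)]; auto; lra
     | lra | rewrite Hs1, Hs2; unfold Kb; apply Rplus_le_compat; apply HKl; auto; rewrite ?Cmod_mult; nra].
  - eapply LB_mono; [apply LB_minus;
       [apply (Phi_LB (1 * ax * ax) (CS (D2a a1)) z1 ax ay1 x0 y0 rb K1 r1) | apply (Phi_LB (1 * ax * ax) (CS (D2a a2)) z2 ax ay2 x0 y0 rb K2 r2)]; auto; lra
     | lra | rewrite Hs1, Hs2; unfold Kb; apply Rplus_le_compat; apply HKl; auto; rewrite ?Cmod_mult; nra].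
  - eapply LB_mono; [apply LB_minus;
       [apply (Phi_LB (1 * ax * ay1) (CS (D2a a1)) z1 ax ay1 x0 y0 rb K1 r1) | apply (Phi_LB (1 * ax * ay2) (CS (D2a a2)) z2 ax ay2 x0 y0 rb K2 r2)]; auto; lra
     | lra | rewrite Hs1, Hs2; unfold Kb; apply Rplus_le_compat; apply HKl; auto; rewrite ?Cmod_mult; nra].
  - eapply LB_mono; [apply LB_minus;
       [apply (Phi_LB (1 * ay1 * ax) (CS (D2a a1)) z1 ax ay1 x0 y0 rb K1 r1) | apply (Phi_LB (1 * ay2 * ax) (CS (D2a a2)) z2 ax ay2 x0 y0 rb K2 r2)]; auto; lra
     | lra | rewrite Hs1, Hs2; unfold Kb; apply Rplus_le_compat; apply HKl; auto; rewrite ?Cmod_mult; nra].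
  - eapply LB_mono; [apply LB_minus;
       [apply (Phi_LB (1 * ay1 * ay1) (CS (D2a a1)) z1 ax ay1 x0 y0 rb K1 r1) | apply (Phi_LB (1 * ay2 * ay2) (CS (D2a a2)) z2 ax ay2 x0 y0 rb K2 r2)]; auto; lra
     | lra | rewrite Hs1, Hs2; unfold Kb; apply Rplus_le_compat; apply HKl; auto; rewrite ?Cmod_mult; nra].
  - split; auto. split; auto. split; auto.
    rewrite E1, E2. cbv beta.
    assert (M1 : (1 * ay1 * ay1)%C = (1 * ax * ax)%C) by (unfold ax, ay1; apply C_eq; simpl; field).
    assert (M2 : (1 * ay2 * ay2)%C = (1 * ax * ax)%C) by (unfold ax, ay2; apply C_eq; simpl; field).
    rewrite M1, M2. ring.
Qed.

Lemma Aff_y0 z0 ax ay ay' x : Aff z0 ax ay x 0 = Aff z0 ax ay' x 0.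
Proof. unfold Aff. rewrite !Cmult_0_l. reflexivity. Qed.

Lemma Aff_real c x : Aff (RtoC (-1/2 - c)) (RtoC (1/2)) (0, 1/2) x 0 = RtoC ((x - 1) / 2 - c).
Proof. apply C_eq; unfold Aff; simpl; field. Qed.

Lemma Cmod_2Ci : Cmod (2 * Ci)%C = 2.
Proof. rewrite Cmod_mult, Cmod_Ci, Cmod_R, Rabs_pos_eq; lra. Qed.

Lemma seg_point f c a r x0 rb : LD f c a r -> 0 < rb ->
  Rabs ((x0 - 1) / 2 - c) + 4 * rb < r -> C1at (Ufun f) x0 0.
Proof.
  intros HLD Hrb Hc. pose proof HLD as [Hr [Hrad _]].
  destruct (CS_all a r ltac:(lra) Hrad) as [K [HK [Q0 [Q1 [Q2 [L0 [L1 L2]]]]]]].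
  set (z0 := RtoC (-1/2 - c)). set (ax := RtoC (1/2)). set (ayu := (0, 1/2) : C).
  set (ay1 := RtoC (-1/2)). set (ay2 := RtoC (1/2)). set (mu := (2 * Ci)%C).
  assert (Cax : Cmod ax = 1/2) by (unfold ax; apply Cmod_half).
  assert (Cayu : Cmod ayu = 1/2) by (unfold ayu; apply Cmod_ihalf).
  assert (Cay1 : Cmod ay1 = 1/2) by (unfold ay1; apply Cmod_mhalf).
  assert (Cay2 : Cmod ay2 = 1/2) by (unfold ay2; apply Cmod_half).
  assert (Cmu : Cmod mu = 2) by apply Cmod_2Ci.
  assert (C1 : Cmod 1 = 1) by apply Cmod_1.
  assert (HA0 : forall ay, Cmod (Aff z0 ax ay x0 0) = Rabs ((x0 - 1) / 2 - c)).
  { intros ay. rewrite (Aff_y0 _ _ _ ayu). unfold z0, ax, ayu. rewrite Aff_real. apply Cmod_R. }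
  assert (HAu : forall x y, Aff z0 ax ayu x y = (wpt x y - RtoC c)%C).
  { intros x y. apply C_eq; unfold Aff, z0, ax, ayu; rewrite ?ReM, ?ImM, ?wpt_Re, ?wpt_Im; simpl; field. }
  assert (Re1 : forall x y, Re (Aff z0 ax ay1 x y) = (x - y - 1) / 2 - c) by (intros; unfold Aff, z0, ax, ay1; simpl; field).
  assert (Re2 : forall x y, Re (Aff z0 ax ay2 x y) = (x + y - 1) / 2 - c) by (intros; unfold Aff, z0, ax, ay2; simpl; field).
  set (Gu := Phi mu (CS a) z0 ax ayu).
  set (Gl := fun x y => Phi 1 (CS a) z0 ax ay1 x y - Phi 1 (CS a) z0 ax ay2 x y).
  assert (Hbox : forall x y, box x0 0 (2 * rb) x y ->
     Rabs ((x - y - 1) / 2 - c) < r /\ Rabs ((x + y - 1) / 2 - c) < r /\ Rabs ((x - 1) / 2 - c) + Rabs (y / 2) < r).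
  { intros x y [Hx Hy]. rewrite Rminus_0_r in Hy.
    assert (E : forall u, Rabs (((x - x0) + u) / 2 + ((x0 - 1) / 2 - c)) <= (Rabs (x - x0) + Rabs u) / 2 + Rabs ((x0 - 1) / 2 - c)).
    { intros u. eapply Rle_trans. apply Rabs_triang. rewrite Rabs_div by lra. rewrite (Rabs_pos_eq 2) by lra.
      pose proof (Rabs_triang (x - x0) u). lra. }
    replace ((x - y - 1) / 2 - c) with (((x - x0) + - y) / 2 + ((x0 - 1) / 2 - c)) by field.
    replace ((x + y - 1) / 2 - c) with (((x - x0) + y) / 2 + ((x0 - 1) / 2 - c)) by field.
    replace ((x - 1) / 2 - c) with (((x - x0) + 0) / 2 + ((x0 - 1) / 2 - c)) by field.
    pose proof (E (- y)). pose proof (E y). pose proof (E 0). rewrite Rabs_Ropp in *. rewrite Rabs_R0 in *.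
    rewrite Rabs_div by lra. rewrite (Rabs_pos_eq 2) by lra. lra. }
  apply (seg_C1 (Ufun f) Gu (Phi (mu * ax) (CS (D1a a)) z0 ax ayu) (Phi (mu * ayu) (CS (D1a a)) z0 ax ayu)
     Gl (fun x y => Phi (1 * ax) (CS (D1a a)) z0 ax ay1 x y - Phi (1 * ax) (CS (D1a a)) z0 ax ay2 x y)
        (fun x y => Phi (1 * ay1) (CS (D1a a)) z0 ax ay1 x y - Phi (1 * ay2) (CS (D1a a)) z0 ax ay2 x y)
     x0 rb (4 * K)); auto.
  - intros x y Hb Hy. rewrite U_up by auto. unfold Gu, Phi. rewrite HAu. f_equal. f_equal.
    apply (LD_ext f c a r HLD). rewrite wpt_Re, wpt_Im. apply Hbox; auto.
  - intros x y Hb Hy. rewrite U_low by auto. unfold Gl. destruct (Hbox x y Hb) as [B1 [B2 _]].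
    rewrite (real_chart f c a r z0 ax ay1 x y HLD); auto; [| rewrite Re1; auto].
    rewrite (real_chart f c a r z0 ax ay2 x y HLD); auto; [| rewrite Re2; auto].
    rewrite Re1, Re2. f_equal; f_equal; ring.
  - eapply QB_mono. apply (Phi_QB mu (CS a) (CS (D1a a)) z0 ax ayu x0 0 rb K r); auto.
    rewrite HA0, Cax, Cayu. lra. lra. rewrite Cmu, Cax, Cayu. nra.
  - eapply QB_mono. apply QB_minus.
    apply (Phi_QB 1 (CS a) (CS (D1a a)) z0 ax ay1 x0 0 rb K r); auto. rewrite HA0, Cax, Cay1. lra.
    apply (Phi_QB 1 (CS a) (CS (D1a a)) z0 ax ay2 x0 0 rb K r); auto. rewrite HA0, Cax, Cay2. lra.
    lra. rewrite C1, Cax, Cay1, Cay2. nra.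
  - intros x Hx. unfold Gu, Gl, Phi. rewrite (Aff_y0 z0 ax ay1 ayu), (Aff_y0 z0 ax ay2 ayu).
    unfold z0, ax, ayu. rewrite Aff_real, CS_real. simpl. ring.
  - intros x Hx. unfold Phi. rewrite (Aff_y0 z0 ax ay1 ayu), (Aff_y0 z0 ax ay2 ayu).
    unfold z0, ax, ayu, ay1, ay2, mu. rewrite Aff_real, CS_real. simpl. field.
  - unfold Phi. rewrite (Aff_y0 z0 ax ay1 ayu), (Aff_y0 z0 ax ay2 ayu).
    unfold z0, ax, ayu, mu. rewrite Aff_real, CS_real. simpl. field.
  - eapply LB_mono. apply (Phi_LB mu (CS a) z0 ax ayu x0 0 rb K r); auto.
    rewrite HA0, Cax, Cayu. lra. lra. rewrite Cmu, Cax, Cayu. nra.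
  - eapply LB_mono. apply (Phi_LB (mu * ax) (CS (D1a a)) z0 ax ayu x0 0 rb K r); auto.
    rewrite HA0, Cax, Cayu. lra. lra. rewrite Cmod_mult, Cmu, Cax, Cayu. nra.
  - eapply LB_mono. apply (Phi_LB (mu * ayu) (CS (D1a a)) z0 ax ayu x0 0 rb K r); auto.
    rewrite HA0, Cax, Cayu. lra. lra. rewrite Cmod_mult, Cmu, Cayu. nra.
  - eapply LB_mono. apply LB_minus.
    apply (Phi_LB 1 (CS a) z0 ax ay1 x0 0 rb K r); auto. rewrite HA0, Cax, Cay1. lra.
    apply (Phi_LB 1 (CS a) z0 ax ay2 x0 0 rb K r); auto. rewrite HA0, Cax, Cay2. lra.
    lra. rewrite C1, Cax, Cay1, Cay2. nra.
  - eapply LB_mono. apply LB_minus.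
    apply (Phi_LB (1 * ax) (CS (D1a a)) z0 ax ay1 x0 0 rb K r); auto. rewrite HA0, Cax, Cay1. lra.
    apply (Phi_LB (1 * ax) (CS (D1a a)) z0 ax ay2 x0 0 rb K r); auto. rewrite HA0, Cax, Cay2. lra.
    lra. rewrite Cmod_mult, C1, Cax, Cay1, Cay2. nra.
  - eapply LB_mono. apply LB_minus.
    apply (Phi_LB (1 * ay1) (CS (D1a a)) z0 ax ay1 x0 0 rb K r); auto. rewrite HA0, Cax, Cay1. lra.
    apply (Phi_LB (1 * ay2) (CS (D1a a)) z0 ax ay2 x0 0 rb K r); auto. rewrite HA0, Cax, Cay2. lra.
    lra. rewrite !Cmod_mult, C1, Cax, Cay1, Cay2. nra.
Qed.

Lemma ReIm_le2 (v : C) : Rabs (Re v) + Rabs (Im v) <= 2 * Cmod v.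
Proof. pose proof (Re_le_Cmod v). pose proof (Im_le_Cmod v). lra. Qed.

Lemma holo_point f c a r t delta w : LD f c a r -> Rabs (t - c) < r / 4 -> 8 * delta <= r -> 0 < delta ->
  Cmod (w - RtoC t)%C < delta -> holo_at (ext f) w.
Proof.
  intros HLD Htc Hd Hdp Hw. pose proof HLD as [Hr [Hrad _]].
  destruct (CS_QC_LC a r ltac:(lra) Hrad) as [K [HK [Q _]]].
  exists (CS (PS_derive a) (w - RtoC c))%C.
  assert (Hloc : forall w', Cmod (w' - RtoC t)%C < 2 * delta -> ext f w' = CS a (w' - RtoC c)%C).
  { intros w' Hw'. apply (LD_ext f c a r HLD).
    pose proof (ReIm_le2 (w' - RtoC t)%C). rewrite ReM, ImM, re_RtoC, im_RtoC, Rminus_0_r in H.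
    replace (Re w' - c) with ((Re w' - t) + (t - c)) by ring.
    pose proof (Rabs_triang (Re w' - t) (t - c)). lra. }
  apply (holo_from_bound _ _ _ delta K); auto.
  intros w' Hw'.
  assert (Hw't : Cmod (w' - RtoC t)%C < 2 * delta).
  { replace (w' - RtoC t)%C with ((w' - w) + (w - RtoC t))%C by ring.
    eapply Rle_lt_trans. apply Cmod_triangle. lra. }
  rewrite (Hloc w' Hw't), (Hloc w) by lra.
  replace (w' - RtoC c)%C with ((w - RtoC c) + (w' - w))%C by ring.
  apply Q.
  replace (w - RtoC c)%C with ((w - RtoC t) + RtoC (t - c))%C by (rewrite RtoC_minus; ring).
  pose proof (Cmod_triangle (w - RtoC t)%C (RtoC (t - c))). rewrite Cmod_R in H. lra.
Qed.

Lemma f_deriv_on f : analytic_near_m10 f -> forall t, -1 <= t <= 0 -> is_derive f t (Derive f t).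
Proof.
  intros Han t Ht. destruct (uniform_LD f Han) as [delta [Hd H]].
  destruct (H t Ht) as [c [a [r [HLD [Htc _]]]]].
  pose proof (LD_deriv f c a r HLD t ltac:(pose proof HLD as [Hr _]; lra)).
  rewrite (is_derive_unique _ _ _ H0). auto.
Qed.

Lemma U_neg_D2 f : analytic_near_m10 f -> (forall x, -1 <= x <= 0 -> Derive f x < 0) ->
  forall x y, D2 x y -> Ufun f x y < 0.
Proof.
  intros Han Hfd x y [Hy [H1 H2]]. rewrite U_low by lra.
  set (al := (x - y - 1) / 2). set (be := (x + y - 1) / 2).
  assert (Hab : be < al) by (unfold al, be; lra).
  destruct (MVT_cor2 f (Derive f) be al Hab) as [xi [Hxi Hxi2]].
  { intros t Ht. apply is_derive_Reals. apply f_deriv_on; auto. unfold al, be in *; lra. }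
  assert (Derive f xi < 0) by (apply Hfd; unfold al, be in *; lra).
  assert (f al - f be < 0) by (rewrite Hxi; nra). lra.
Qed.

Lemma pos_near f c a r delta x0 : LD f c a r -> Rabs ((x0 - 1) / 2 - c) < r / 4 -> 8 * delta <= r -> 0 < delta ->
  Derive f ((x0 - 1) / 2) < 0 ->
  exists rho, 0 < rho /\ rho <= delta /\ forall x y, Rabs (x - x0) < rho -> 0 < y < rho -> 0 < Ufun f x y.
Proof.
  intros HLD Hc Hd Hdp Hneg. pose proof HLD as [Hr [Hrad _]].
  destruct (CS_all a r ltac:(lra) Hrad) as [K [HK [Q0 [Q1 [Q2 [L0 [L1 L2]]]]]]].
  set (m0 := - Derive f ((x0 - 1) / 2)).
  assert (Hm0 : 0 < m0) by (unfold m0; lra).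
  assert (Hm0' : Re (CS (D1a a) (RtoC ((x0 - 1) / 2 - c))) = - m0).
  { unfold m0. rewrite (LD_Derive f c a r HLD); [ring | lra]. }
  set (rho := Rmin delta (m0 / (2 * (K + 1)))).
  assert (Hrho : 0 < rho) by (apply Rmin_pos; auto; apply Rdiv_lt_0_compat; lra).
  exists rho. split; auto. split. apply Rmin_l. intros x y Hx [Hy1 Hy2].
  assert (Hrd : rho <= delta) by apply Rmin_l.
  assert (HrK : rho * (K + 1) <= m0 / 2).
  { apply Rle_trans with (m0 / (2 * (K + 1)) * (K + 1)). apply Rmult_le_compat_r. lra. apply Rmin_r.
    right. field. lra. }
  rewrite U_up by auto.
  assert (Hloc : ext f (wpt x y) = CS a (RtoC ((x - 1) / 2 - c) + (0, (y / 2)%R))%C).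
  { rewrite (LD_ext f c a r HLD). f_equal. apply C_eq; rewrite ?ReM, ?ImM, ?ReP, ?ImP, ?wpt_Re, ?wpt_Im; simpl; ring.
    rewrite wpt_Re, wpt_Im, (Rabs_pos_eq (y / 2)) by lra.
    replace ((x - 1) / 2 - c) with (((x - 1) / 2 - (x0 - 1) / 2) + ((x0 - 1) / 2 - c)) by ring.
    pose proof (Rabs_triang ((x - 1) / 2 - (x0 - 1) / 2) ((x0 - 1) / 2 - c)). rewrite Rabs_half_le in H. lra. }
  rewrite Hloc.
  set (A1 := RtoC ((x - 1) / 2 - c)). set (h := (0, (y / 2)%R) : C).
  assert (Hch : Cmod h = y / 2) by (unfold h; rewrite Cmod_im, Rabs_pos_eq; lra).
  assert (HA1 : Cmod A1 <= Rabs ((x0 - 1) / 2 - c) + rho / 2).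
  { unfold A1. rewrite Cmod_R.
    replace ((x - 1) / 2 - c) with (((x - 1) / 2 - (x0 - 1) / 2) + ((x0 - 1) / 2 - c)) by ring.
    pose proof (Rabs_triang ((x - 1) / 2 - (x0 - 1) / 2) ((x0 - 1) / 2 - c)). rewrite Rabs_half_le in H. lra. }
  pose proof (Q0 A1 h ltac:(lra)) as E.
  set (A0 := RtoC ((x0 - 1) / 2 - c)).
  assert (HL : Cmod (CS (D1a a) A1 - CS (D1a a) A0)%C <= K * (rho / 2)).
  { replace A1 with (A0 + (A1 - A0))%C by ring.
    assert (Cmod (A1 - A0)%C <= rho / 2).
    { unfold A1, A0. rewrite <- RtoC_minus, Cmod_R.
      replace ((x - 1) / 2 - c - ((x0 - 1) / 2 - c)) with ((x - 1) / 2 - (x0 - 1) / 2) by ring.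
      rewrite Rabs_half_le. lra. }
    eapply Rle_trans. apply L1. assert (Cmod A0 = Rabs ((x0 - 1) / 2 - c)) by (unfold A0; apply Cmod_R). lra.
    replace (A0 + (A1 - A0) - A0)%C with (A1 - A0)%C by ring. apply Rmult_le_compat_l; auto. }
  assert (Hre1 : Re (CS (D1a a) A1) <= - m0 + K * (rho / 2)).
  { rewrite <- Hm0'. pose proof (Re_le_Cmod (CS (D1a a) A1 - CS (D1a a) A0)%C). rewrite ReM in H.
    pose proof (Rle_abs (Re (CS (D1a a) A1) - Re (CS (D1a a) A0))). fold A0. lra. }
  set (S0 := CS a A1). set (S1 := CS (D1a a) A1). set (Er := (CS a (A1 + h) - S0 - h * S1)%C).
  replace (CS a (A1 + h))%C with (S0 + h * S1 + Er)%C by (unfold Er; ring).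
  assert (HS0 : Im S0 = 0) by (unfold S0, A1; apply Im_CS_real).
  assert (HS1 : Im S1 = 0) by (unfold S1, A1; apply Im_CS_real).
  replace (Re (2 * Ci * (S0 + h * S1 + Er))%C) with (- y * Re S1 - 2 * Im Er).
  2: { unfold h. clearbody S0 S1 Er. destruct S0 as [p q], S1 as [p1 q1], Er as [p2 q2]. simpl in HS0, HS1 |- *. subst. field. }
  assert (HEr : Rabs (Im Er) <= K * (y / 2) ^ 2) by (eapply Rle_trans; [apply Im_le_Cmod| rewrite <- Hch; exact E]).
  pose proof (Rle_abs (Im Er)). pose proof (Rle_abs (- Im Er)). rewrite Rabs_Ropp in H0.
  assert (y * (m0 - K * (rho / 2)) - 2 * (K * (y / 2) ^ 2) > 0).
  { assert (K * y <= K * rho) by (apply Rmult_le_compat_l; lra).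
    assert (K * rho <= m0 / 2) by nra.
    replace (y * (m0 - K * (rho / 2)) - 2 * (K * (y / 2) ^ 2)) with (y * (m0 - K * rho / 2 - K * y / 2)). 2: { field. }
    apply Rmult_lt_0_compat; lra. }
  assert (y * Re S1 <= y * (- m0 + K * (rho / 2))) by (apply Rmult_le_compat_l; [lra | unfold S1; lra]).
  lra.
Qed.

Lemma open2_ball A x y : open2 A -> A x y -> exists e, 0 < e /\ forall u v, Rabs (u - x) < e -> Rabs (v - y) < e -> A u v.
Proof.
  intros HA H. destruct (HA x y H) as [e [He Hb]]. exists (e / 2). split. lra.
  intros u v Hu Hv. apply Hb.
  assert ((u - x) ^ 2 < (e/2) ^ 2). { rewrite <- (pow2_abs (u - x)). pose proof (Rabs_pos (u - x)). nra. }
  assert ((v - y) ^ 2 < (e/2) ^ 2). { rewrite <- (pow2_abs (v - y)). pose proof (Rabs_pos (v - y)). nra. }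
  nra.
Qed.

Lemma seg_conn (S A B : R -> R -> Prop) px py qx qy :
  open2 A -> open2 B ->
  (forall x y, S x y -> A x y \/ B x y) -> (forall x y, S x y -> A x y -> B x y -> False) ->
  (forall t, 0 <= t <= 1 -> S (px + t * (qx - px)) (py + t * (qy - py))) ->
  A px py -> A qx qy.
Proof.
  intros HA HB Hcov Hdis Hpath Hp.
  set (P := fun t => 0 <= t <= 1 /\ forall s, 0 <= s <= t -> A (px + s * (qx - px)) (py + s * (qy - py))).
  assert (Hb : bound P) by (exists 1; intros t [Ht _]; lra).
  assert (Hne : exists t, P t).
  { exists 0. split. lra. intros s Hs. replace s with 0 by lra. rewrite !Rmult_0_l, !Rplus_0_r. auto. }
  destruct (completeness P Hb Hne) as [tau [Hub Hlub]].
  assert (Htau0 : 0 <= tau) by (apply Hub; destruct Hne as [t Ht]; unfold P; split; [lra|]; intros s Hs; replace s with 0 by lra; rewrite !Rmult_0_l, !Rplus_0_r; auto).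
  assert (Htau1 : tau <= 1) by (apply Hlub; intros t [Ht _]; lra).
  assert (Hbelow : forall s, 0 <= s < tau -> A (px + s * (qx - px)) (py + s * (qy - py))).
  { intros s Hs. destruct (Rle_lt_dec tau s) as [h|h]; [lra|].
    destruct (classic (exists t, P t /\ s <= t)) as [[t [[Ht1 Ht2] Hst]]|Hn].
    - apply Ht2. lra.
    - exfalso. assert (is_upper_bound P s).
      { intros t Ht. destruct (Rle_lt_dec t s); auto. exfalso. apply Hn. exists t. split; auto; lra. }
      specialize (Hlub s H). lra. }
  set (L := Rabs (qx - px) + Rabs (qy - py) + 1).
  assert (HL : 0 < L) by (unfold L; pose proof (Rabs_pos (qx - px)); pose proof (Rabs_pos (qy - py)); lra).
  assert (Hnear : forall s e, 0 < e -> Rabs (s - tau) < e / L ->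
            Rabs ((px + s * (qx - px)) - (px + tau * (qx - px))) < e /\ Rabs ((py + s * (qy - py)) - (py + tau * (qy - py))) < e).
  { intros s e He Hs.
    replace (px + s * (qx - px) - (px + tau * (qx - px))) with ((s - tau) * (qx - px)) by ring.
    replace (py + s * (qy - py) - (py + tau * (qy - py))) with ((s - tau) * (qy - py)) by ring.
    rewrite !Rabs_mult.
    assert (Rabs (s - tau) * L < e).
    { apply Rlt_le_trans with (e / L * L). apply Rmult_lt_compat_r; auto. right; field; lra. }
    unfold L in H. pose proof (Rabs_pos (s - tau)). pose proof (Rabs_pos (qx - px)). pose proof (Rabs_pos (qy - py)).
    split; nra. }
  destruct (Hcov _ _ (Hpath tau ltac:(lra))) as [HAt|HBt].
  - destruct (open2_ball A _ _ HA HAt) as [e [He HeA]].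
    destruct (Rle_lt_dec 1 tau) as [Ht1|Ht1].
    + assert (tau = 1) by lra. subst tau. rewrite !Rmult_1_l in HAt.
      replace qx with (px + (qx - px)) by ring. replace qy with (py + (qy - py)) by ring. auto.
    + exfalso. set (t' := Rmin (tau + e / L / 2) 1).
      assert (Ht' : tau < t').
      { unfold t'. apply Rmin_glb_lt; [|lra]. assert (0 < e / L / 2) by (apply Rdiv_lt_0_compat; [apply Rdiv_lt_0_compat|]; lra). lra. }
      assert (P t').
      { split. split. lra. apply Rmin_r. intros s Hs.
        destruct (Rlt_le_dec s tau) as [h|h]. apply Hbelow; lra.
        assert (Rabs (s - tau) < e / L).
        { rewrite Rabs_pos_eq by lra. assert (s <= tau + e / L / 2) by (eapply Rle_trans; [apply Hs| apply Rmin_l]).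
          assert (0 < e / L) by (apply Rdiv_lt_0_compat; lra). lra. }
        destruct (Hnear s e He H) as [N1 N2]. apply HeA; auto. }
      specialize (Hub t' H). lra.
  - exfalso. destruct (open2_ball B _ _ HB HBt) as [e [He HeB]].
    destruct (Req_dec tau 0) as [Ht0|Ht0].
    + subst tau. rewrite !Rmult_0_l, !Rplus_0_r in HBt. apply (Hdis px py); auto.
      specialize (Hpath 0 ltac:(lra)). rewrite !Rmult_0_l, !Rplus_0_r in Hpath. auto.
    + set (s := Rmax 0 (tau - e / L / 2)).
      assert (0 < e / L) by (apply Rdiv_lt_0_compat; lra).
      assert (Hs : 0 <= s < tau).
      { unfold s. split. apply Rmax_l. apply Rmax_lub_lt; lra. }
      assert (Rabs (s - tau) < e / L).
      { rewrite Rabs_left by lra. assert (tau - e / L / 2 <= s) by apply Rmax_r. lra. }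
      destruct (Hnear s e He H0) as [N1 N2].
      apply (Hdis (px + s * (qx - px)) (py + s * (qy - py))).
      apply Hpath; lra. apply Hbelow; auto. apply HeB; auto.
Qed.

Lemma conn_paths (S : R -> R -> Prop) ox oy :
  S ox oy ->
  (forall qx qy, S qx qy -> exists mx my,
      (forall t, 0 <= t <= 1 -> S (ox + t * (mx - ox)) (oy + t * (my - oy))) /\
      (forall t, 0 <= t <= 1 -> S (mx + t * (qx - mx)) (my + t * (qy - my)))) ->
  connected2 S.
Proof.
  intros Ho Hp [A [B [HA [HB [Hcov [Hdis [[ax [ay [Sa Aa]]] [bx [by_ [Sb Bb]]]]]]]]]].
  assert (Hreach : forall (A' B' : R -> R -> Prop), open2 A' -> open2 B' ->
     (forall x y, S x y -> A' x y \/ B' x y) -> (forall x y, S x y -> A' x y -> B' x y -> False) ->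
     A' ox oy -> forall qx qy, S qx qy -> A' qx qy).
  { intros A' B' HA' HB' Hc Hd Ho' qx qy Hq. destruct (Hp qx qy Hq) as [mx [my [P1 P2]]].
    assert (A' mx my) by (apply (seg_conn S A' B' ox oy mx my); auto).
    apply (seg_conn S A' B' mx my qx qy); auto. }
  destruct (Hcov ox oy Ho) as [Ao|Bo].
  - apply (Hdis bx by_); auto. apply (Hreach A B); auto.
  - apply (Hdis ax ay); auto. apply (Hreach B A); auto.
    intros x y Hs; destruct (Hcov x y Hs); auto.
    intros x y Hs H1 H2; apply (Hdis x y); auto.
Qed.

Lemma sgn_pos u : 0 < u -> sgn u = 1.
Proof. intros H. unfold sgn. destruct (Rlt_dec 0 u); [auto| lra]. Qed.
Lemma sgn_neg u : u < 0 -> sgn u = -1.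
Proof. intros H. unfold sgn. destruct (Rlt_dec 0 u); [lra|]. destruct (Rlt_dec u 0); [auto|lra]. Qed.

Theorem mainTheorem2 (f : R -> R)
  (Hf_an : analytic_near_m10 f)
  (Hf0 : f (-1) = 0)
  (Hfd : forall x, -1 <= x <= 0 -> Derive f x < 0) :
  exists (D1 : R -> R -> Prop) (U : R -> R -> R),
    open2 D1 /\
    (forall x y, D1 x y -> 0 < y) /\
    domain2 (fun x y => D1 x y \/ Seg x y \/ D2 x y) /\
    C1on (fun x y => D1 x y \/ Seg x y \/ D2 x y) U /\
    C2on D1 U /\ C2on D2 U /\
    (forall x y, D1 x y \/ D2 x y ->
       dx (dx U) x y + sgn (U x y) * dy (dy U) x y = 0) /\
    (forall x y, D1 x y -> 0 < U x y) /\
    (forall x y, D2 x y -> U x y < 0) /\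
    (forall x, -1 <= x <= 0 -> U x (- x - 1) = f x) /\
    (forall x y, D2 x y ->
       U x y = f ((x - y - 1) / 2) - f ((x + y - 1) / 2)) /\
    (exists (g : C -> C) (delta : R), 0 < delta /\
       (forall w : C, (exists t, -1 <= t <= 0 /\ Cmod (Cminus w (RtoC t)) < delta) ->
          holo_at g w) /\
       (forall t, -1 - delta < t < delta -> g (RtoC t) = RtoC (f t)) /\
       (forall x y, D1 x y ->
          let w := Cmult (Cminus (x, y) (RtoC 1)) (RtoC (/ 2)) in
          let w' := Cmult (Cminus (x, - y) (RtoC 1)) (RtoC (/ 2)) in
          (exists t, -1 <= t <= 0 /\ Cmod (Cminus w (RtoC t)) < delta) /\
          (exists t, -1 <= t <= 0 /\ Cmod (Cminus w' (RtoC t)) < delta) /\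
          U x y = Re (Cmult Ci (Cminus (g w) (g w'))))).
Proof.
  destruct (uniform_LD f Hf_an) as [delta [Hdel Hunif]].
  set (U := Ufun f).
  set (D1 := fun x y => 0 < y /\ exists x0 rho, -1 < x0 < 1 /\ 0 < rho /\ rho <= delta /\
      -1 <= x0 - rho /\ x0 + rho <= 1 /\ Rabs (x - x0) < rho /\ y < rho /\
      (forall x' y', Rabs (x' - x0) < rho -> 0 < y' < rho -> 0 < U x' y')).
  assert (HD1 : forall x y, D1 x y -> 0 < y < delta /\ -1 < x < 1 /\ 0 < U x y).
  { intros x y [Hy [x0 [rho [H1 [H2 [H3 [H4 [H5 [H6 [H7 H8]]]]]]]]]].
    apply Rabs_def2 in H6. split; [lra|]. split; [lra|]. apply H8. apply Rabs_def1; lra. lra. }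
  assert (Hseg : forall x0, -1 < x0 < 1 -> exists rho, 0 < rho /\ rho <= delta /\
      -1 <= x0 - 2 * rho /\ x0 + 2 * rho <= 1 /\
      forall x' y', Rabs (x' - x0) < rho -> 0 < y' < rho -> 0 < U x' y').
  { intros x0 Hx0. destruct (Hunif ((x0 - 1) / 2) ltac:(lra)) as [c [a [r [HLD [Hc Hr]]]]].
    destruct (pos_near f c a r delta x0 HLD Hc Hr Hdel (Hfd ((x0 - 1) / 2) ltac:(lra))) as [rho0 [Hr0 [Hr0d Hpos]]].
    set (rho := Rmin rho0 (Rmin ((1 - x0) / 2) ((1 + x0) / 2))).
    assert (Hrho : 0 < rho) by (apply Rmin_pos; auto; apply Rmin_pos; lra).
    assert (rho <= rho0) by apply Rmin_l.
    assert (rho <= (1 - x0) / 2) by (eapply Rle_trans; [apply Rmin_r| apply Rmin_l]).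
    assert (rho <= (1 + x0) / 2) by (eapply Rle_trans; [apply Rmin_r| apply Rmin_r]).
    exists rho. repeat split; try lra.
    intros x' y' Hx' Hy'. apply Hpos; lra. }
  exists D1, U.
  assert (HopenD1 : open2 D1).
  { intros x y [Hy [x0 [rho [H1 [H2 [H3 [H4 [H5 [H6 [H7 H8]]]]]]]]]].
    set (e := Rmin (rho - Rabs (x - x0)) (Rmin y (rho - y))).
    assert (He : 0 < e) by (apply Rmin_pos; [lra| apply Rmin_pos; lra]).
    exists e. split; auto. intros u v Huv.
    assert (Hu : Rabs (u - x) < e).
    { rewrite <- (Rabs_pos_eq e) by lra. apply Rsqr_lt_abs_0. unfold Rsqr. pose proof (pow2_ge_0 (v - y)). nra. }
    assert (Hv : Rabs (v - y) < e).
    { rewrite <- (Rabs_pos_eq e) by lra. apply Rsqr_lt_abs_0. unfold Rsqr. pose proof (pow2_ge_0 (u - x)). nra. }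
    assert (e <= rho - Rabs (x - x0)) by apply Rmin_l.
    assert (e <= y) by (eapply Rle_trans; [apply Rmin_r| apply Rmin_l]).
    assert (e <= rho - y) by (eapply Rle_trans; [apply Rmin_r| apply Rmin_r]).
    apply Rabs_def2 in Hv.
    split. lra. exists x0, rho. repeat split; auto; try lra.
    replace (u - x0) with ((u - x) + (x - x0)) by ring. eapply Rle_lt_trans. apply Rabs_triang. lra. }
  assert (HC1pt : forall x y, D1 x y -> C1at U x y /\ C1at (dx U) x y /\ C1at (dy U) x y /\
                dx (dx U) x y + dy (dy U) x y = 0).
  { intros x y HD. destruct (HD1 x y HD) as [[Hy Hyd] [Hx _]].
    destruct (Hunif ((x - 1) / 2) ltac:(lra)) as [c [a [r [HLD [Hc Hr]]]]].
    assert (Rmin (y/8) (delta/16) <= y/8) by apply Rmin_l.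
    assert (Rmin (y/8) (delta/16) <= delta/16) by apply Rmin_r.
    apply (upper_point f c a r x y (Rmin (y / 8) (delta / 16)) HLD).
    - apply Rmin_pos; lra.
    - lra.
    - lra. }
  assert (HC2pt : forall x y, D2 x y -> C1at U x y /\ C1at (dx U) x y /\ C1at (dy U) x y /\
                dx (dx U) x y - dy (dy U) x y = 0).
  { intros x y [Hy [H1 H2]].
    destruct (Hunif ((x - y - 1) / 2) ltac:(lra)) as [c1 [a1 [r1 [HL1 [Hc1 Hr1]]]]].
    destruct (Hunif ((x + y - 1) / 2) ltac:(lra)) as [c2 [a2 [r2 [HL2 [Hc2 Hr2]]]]].
    set (rb := Rmin (- y / 8) (delta / 16)).
    assert (rb <= - y / 8) by apply Rmin_l. assert (rb <= delta / 16) by apply Rmin_r.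
    assert (0 < rb) by (apply Rmin_pos; lra).
    apply (lower_point f c1 a1 r1 c2 a2 r2 x y rb HL1 HL2); lra. }
  assert (HSpt : forall x, -1 < x < 1 -> C1at U x 0).
  { intros x Hx. destruct (Hunif ((x - 1) / 2) ltac:(lra)) as [c [a [r [HLD [Hc Hr]]]]].
    apply (seg_point f c a r x (delta / 16) HLD); lra. }
  assert (Hsq : forall u v x y e, 0 < e -> (u - x) ^ 2 + (v - y) ^ 2 < e ^ 2 -> Rabs (u - x) < e /\ Rabs (v - y) < e).
  { intros u v x y e He H. split.
    - rewrite <- (Rabs_pos_eq e) by lra. apply Rsqr_lt_abs_0. unfold Rsqr. pose proof (pow2_ge_0 (v - y)). nra.
    - rewrite <- (Rabs_pos_eq e) by lra. apply Rsqr_lt_abs_0. unfold Rsqr. pose proof (pow2_ge_0 (u - x)). nra. }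
  split; auto. split. { intros x y H; apply H. }
  split.
  { split. { exists 0, 0. right; left. split; auto; lra. }
    split.
    - intros x y [HD|[[Hy Hx]|HD]].
      + destruct (HopenD1 x y HD) as [e [He Hb]]. exists e. split; [auto|]. intros u v Huv. left. apply Hb; auto.
      + subst y. destruct (Hseg x Hx) as [rho [Hr [Hrd [Hl1 [Hl2 Hpos]]]]].
        exists rho. split; [auto|]. intros u v Huv. destruct (Hsq u v x 0 rho Hr Huv) as [Hu Hv].
        rewrite Rminus_0_r in Hv. pose proof Hu as Hu'. apply Rabs_def2 in Hu'. apply Rabs_def2 in Hv.
        destruct (Rlt_le_dec 0 v) as [hv|hv].
        * left. split; auto. exists x, rho. repeat split; auto; lra.
        * destruct (Req_dec v 0) as [hv0|hv0].
          -- right; left. split; auto. lra.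
          -- right; right. split; [lra|split; lra].
      + destruct HD as [Hy [H1 H2]].
        set (e := Rmin (- y) (Rmin (y - (x - 1)) (y + x + 1)) / 2).
        assert (He : 0 < e) by (unfold e; apply Rdiv_lt_0_compat; [apply Rmin_pos; [|apply Rmin_pos]|]; lra).
        assert (e <= - y / 2) by (unfold e; apply Rmult_le_compat_r; [lra| apply Rmin_l]).
        assert (e <= (y - (x - 1)) / 2) by (unfold e; apply Rmult_le_compat_r; [lra| eapply Rle_trans; [apply Rmin_r| apply Rmin_l]]).
        assert (e <= (y + x + 1) / 2) by (unfold e; apply Rmult_le_compat_r; [lra| eapply Rle_trans; [apply Rmin_r| apply Rmin_r]]).
        exists e. split; [auto|]. intros u v Huv. destruct (Hsq u v x y e He Huv) as [Hu Hv].
        apply Rabs_def2 in Hu. apply Rabs_def2 in Hv.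
        right; right. split; [lra| split; lra].
    - apply (conn_paths _ 0 0). { right; left; split; auto; lra. }
      intros qx qy [HD|[[Hy Hx]|HD]].
      + pose proof (HD1 qx qy HD) as [[Hqy _] [Hqx _]].
        destruct HD as [_ [x0 [rho [H1 [H2 [H3 [H4 [H5 [H6 [H7 H8]]]]]]]]]].
        exists qx, 0. split.
        * intros t Ht. right; left. split; [ring|]. nra.
        * intros t Ht. destruct (Req_dec t 0) as [h|h].
          -- subst t. right; left. split; [ring|]. replace (qx + 0 * (qx - qx)) with qx by ring. auto.
          -- left. replace (qx + t * (qx - qx)) with qx by ring. replace (0 + t * (qy - 0)) with (t * qy) by ring.
             split. nra. exists x0, rho. repeat split; auto; nra.
      + subst qy. exists qx, 0. split.
        * intros t Ht. right; left. split; [ring|]. nra.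
        * intros t Ht. right; left. split; [ring|]. replace (qx + t * (qx - qx)) with qx by ring. auto.
      + destruct HD as [Hy [H1 H2]]. exists qx, qy. split.
        * intros t Ht. destruct (Req_dec t 0) as [h|h].
          -- subst t. right; left. split; [ring|]. lra.
          -- right; right. replace (0 + t * (qx - 0)) with (t * qx) by ring. replace (0 + t * (qy - 0)) with (t * qy) by ring.
             split; [nra|split; nra].
        * intros t Ht. right; right. replace (qx + t * (qx - qx)) with qx by ring.
          replace (qy + t * (qy - qy)) with qy by ring. split; auto. }
  split.
  { intros x y [HD|[[Hy Hx]|HD]].
    - apply (HC1pt x y HD).
    - subst y. apply (HSpt x Hx).
    - apply (HC2pt x y HD). }
  split. { split; [|split]; intros x y HD; apply (HC1pt x y HD). }
  split. { split; [|split]; intros x y HD; apply (HC2pt x y HD). }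
  split.
  { intros x y [HD|HD].
    - destruct (HD1 x y HD) as [_ [_ Hp]]. rewrite sgn_pos by auto. rewrite Rmult_1_l. apply (HC1pt x y HD).
    - rewrite sgn_neg by (apply U_neg_D2; auto). pose proof (proj2 (proj2 (proj2 (HC2pt x y HD)))). lra. }
  split. { intros x y HD; apply (HD1 x y HD). }
  split. { intros x y HD. apply U_neg_D2; auto. }
  split.
  { intros x Hx. unfold U. rewrite U_low by lra.
    replace ((x - (- x - 1) - 1) / 2) with x by field. replace ((x + (- x - 1) - 1) / 2) with (-1) by field.
    rewrite Hf0. ring. }
  split. { intros x y HD. unfold U. apply U_low. destruct HD; lra. }
  exists (ext f), delta. split; auto. split.
  { intros w [t [Ht Hw]]. destruct (Hunif t Ht) as [c [a [r [HLD [Hc Hr]]]]].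
    apply (holo_point f c a r t delta w); auto. }
  split. { intros t _. apply ext_real. }
  intros x y HD. destruct (HD1 x y HD) as [[Hy Hyd] [Hx _]]. cbv zeta.
  assert (Hm : forall s, Cmod (Cminus (Cmult (Cminus (x, s) (RtoC 1)) (RtoC (/ 2))) (RtoC ((x - 1) / 2))) = Rabs s / 2).
  { intros s. replace (Cminus (Cmult (Cminus (x, s) (RtoC 1)) (RtoC (/ 2))) (RtoC ((x - 1) / 2))) with ((0, (s / 2)%R) : C).
    rewrite Cmod_im. rewrite Rabs_div by lra. rewrite (Rabs_pos_eq 2) by lra. reflexivity.
    apply C_eq; simpl; field. }
  split. { exists ((x - 1) / 2). split. lra. rewrite Hm, Rabs_pos_eq; lra. }
  split. { exists ((x - 1) / 2). split. lra. rewrite Hm, Rabs_Ropp, Rabs_pos_eq; lra. }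
  unfold U, Ufun. destruct (Rle_dec y 0); [lra|reflexivity].
Qed.
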